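(* Let $H(x)=1-\log(2-x)$ and, for $n\ge1$, $H_n(x)=1+(H(x)-1)/n$. Consider $X_0=0$, $X_n=\sum_{j=1}^{X_{n-1}}\xi_{n,j}+\varepsilon_n$, with $\{\xi_{n,j},\varepsilon_n\}$ independent nonnegative integer-valued, $\xi_{n,j}$ identically distributed in $j$ with generating function $G_n$ satisfying $G_n'(1)=\rho_n=1-1/n$ and $\lim_{n\to\infty}G_n''(1)\,n=0$, and $\varepsilon_n$ with generating function $H_n$. Then $H_n$ is a probability generating function, $\lim_{n}\frac{H_n^{(k)}(1)}{k(1-\rho_n)}=\frac{(k-1)!}{k}$ for every $k\ge1$, and $X_n$ converges in distribution to the compound Poisson distribution $\mathrm{CP}(\mu)$ with $$\mu\{j\}=\frac1j\Big[\log 2-\sum_{k=1}^{j-1}\frac{1}{k2^k}\Big],\qquad j\ge1;$$ equivalently, for $x\in(0,1)$, $\sum_{l=1}^\infty\frac{(x-1)^l}{l^2}=\sum_{j=1}^\infty\mu\{j\}(x^j-1)$.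
   Context: For a finite measure $\mu$ on $\{1,2,\dots\}$, $\mathrm{CP}(\mu)$ is the distribution with generating function $\exp\{\sum_{j\ge1}\mu\{j\}(x^j-1)\}$, $x\in[0,1]$. *)

(* Defs.v *)
From Stdlib Require Import Reals Arith Factorial.
Open Scope R_scope.

Definition H (x : R) : R := 1 - ln (2 - x).
Definition Hn (n : nat) (x : R) : R := 1 + (H x - 1) / INR n.

Definition rho (n : nat) : R := 1 - / INR n.

Definition is_pmf (p : nat -> R) : Prop :=
  (forall k, 0 <= p k) /\ infinite_sum p 1.

Definition has_pgf (p : nat -> R) (G : R -> R) : Prop :=
  forall x, 0 <= x <= 1 -> infinite_sum (fun k => p k * x ^ k) (G x).

Definition is_pgf (G : R -> R) : Prop :=
  exists p, is_pmf p /\ has_pgf p G.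

Fixpoint csum (f : nat -> R) (n : nat) : R :=
  match n with O => f O | S m => csum f m + f (S m) end.
Definition conv (p q : nat -> R) (k : nat) : R :=
  csum (fun i => p i * q (k - i)%nat) k.
Definition delta0 (k : nat) : R := match k with O => 1 | _ => 0 end.
Fixpoint convpow (p : nat -> R) (m : nat) : nat -> R :=
  match m with O => delta0 | S m' => conv p (convpow p m') end.

(* L is the sequence of laws of X_n: X_0 = 0 and
   X_n = sum_{j=1}^{X_{n-1}} xi_{n,j} + eps_n  (all independent),
   with xi_{n,.} of law g n and eps_n of law e n. *)
Definition bpi_laws (g e L : nat -> nat -> R) : Prop :=
  L O = delta0 /\
  forall n k, (1 <= n)%nat ->
    infinite_sum (fun m => L (n - 1)%nat m * conv (convpow (g n) m) (e n) k) (L n k).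

Inductive nth_deriv (D : R -> Prop) : nat -> (R -> R) -> (R -> R) -> Prop :=
| nth_deriv0 f : nth_deriv D O f f
| nth_derivS k f f' g :
    (forall x, D x -> derivable_pt_lim f x (f' x)) ->
    nth_deriv D k f' g -> nth_deriv D (S k) f g.

(* partial sum  sum_{k=1}^{j-1} 1/(k 2^k) *)
Fixpoint psum (j : nat) : R :=
  match j with
  | O => 0
  | S j' => psum j' + match j' with O => 0 | _ => / (INR j' * 2 ^ j') end
  end.

Definition mu (j : nat) : R := / INR j * (ln 2 - psum j).

Definition is_CP_mu (q : nat -> R) : Prop :=
  is_pmf q /\
  forall x, 0 <= x <= 1 ->
    exists s0, infinite_sum (fun j => mu (S j) * (x ^ (S j) - 1)) s0 /\
              infinite_sum (fun k => q k * x ^ k) (exp s0).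

Definition conv_dist (L : nat -> nat -> R) (q : nat -> R) : Prop :=
  forall k, Un_cv (fun n => L n k) (q k).

(* Main.v *)
Require Import Defs.
From Stdlib Require Import Reals Arith Factorial Lra Lia.
From Coquelicot Require Import Coquelicot.
Open Scope R_scope.

Lemma psum_le_lim (a : nat -> R) l : (forall n, 0 <= a n) -> is_series a l ->
  forall N, sum_f_R0 a N <= l.
Proof.
  intros Ha Hl N. apply is_series_Reals in Hl.
  apply (growing_ineq (fun N => sum_f_R0 a N)); auto.
  intro n. simpl. specialize (Ha (S n)). lra.
Qed.

Lemma term_le_lim (a : nat -> R) l : (forall n, 0 <= a n) -> is_series a l ->
  forall n, a n <= l.
Proof.
  intros Ha Hl n. apply Rle_trans with (sum_f_R0 a n).
  - destruct n; simpl. lra. assert (0 <= sum_f_R0 a n).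
    { apply cond_pos_sum; auto. } lra.
  - apply psum_le_lim; auto.
Qed.

Lemma lim_le_bound (a : nat -> R) l M : is_series a l ->
  (forall N, sum_f_R0 a N <= M) -> l <= M.
Proof.
  intros Hl HM. apply is_series_Reals in Hl.
  apply is_lim_seq_Reals in Hl.
  apply (is_lim_seq_le (fun N => sum_f_R0 a N) (fun _ => M) l M); auto.
  apply is_lim_seq_const.
Qed.

Lemma series_ge0 (a : nat -> R) l : (forall n, 0 <= a n) -> is_series a l -> 0 <= l.
Proof. intros Ha Hl. apply Rle_trans with (a O). auto. apply term_le_lim; auto. Qed.

Lemma ex_series_nonneg_bounded (a : nat -> R) M : (forall n, 0 <= a n) ->
  (forall N, sum_f_R0 a N <= M) -> ex_series a.
Proof.
  intros Ha HM.
  assert (Hb : bound (EUn (fun N => sum_f_R0 a N))).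
  { exists M. intros x [n ->]. auto. }
  destruct (Un_cv_crit (fun N => sum_f_R0 a N)) as [l Hl]; auto.
  intro n. simpl. specialize (Ha (S n)). lra.
  exists l; apply is_series_Reals; auto.
Qed.

Lemma Series_sum_f (a : nat -> nat -> R) K :
  (forall k, ex_series (fun m => a m k)) ->
  Series (fun m => sum_f_R0 (a m) K) = sum_f_R0 (fun k => Series (fun m => a m k)) K.
Proof.
  intros Hex. induction K; simpl.
  - reflexivity.
  - rewrite Series_plus. rewrite IHK. reflexivity.
    clear IHK. induction K; simpl. apply Hex.
    apply (ex_series_plus (V:=R_NormedModule)); auto.
    apply Hex.
Qed.

Lemma tonelli (a : nat -> nat -> R) (A : nat -> R) S :
  (forall m k, 0 <= a m k) -> (forall m, is_series (a m) (A m)) -> is_series A S ->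
  (forall k, ex_series (fun m => a m k)) /\
  is_series (fun k => Series (fun m => a m k)) S.
Proof.
  intros Ha HA HS.
  assert (HA0 : forall m, 0 <= A m) by (intro m; apply (series_ge0 (a m)); auto).
  assert (Hcol : forall k, ex_series (fun m => a m k)).
  { intro k. apply (ex_series_le (V:=R_CompleteNormedModule)) with A.
    intro m. rewrite Rabs_pos_eq; auto. apply term_le_lim; auto.
    exists S; auto. }
  split; auto.
  set (B := fun k => Series (fun m => a m k)).
  assert (HB0 : forall k, 0 <= B k).
  { intro k. apply (series_ge0 (fun m => a m k)); auto. apply Series_correct; auto. }
  assert (Hpart : forall K, sum_f_R0 B K <= S).
  { intro K. unfold B. rewrite <- Series_sum_f; auto.
    rewrite <- (is_series_unique A S HS).
    apply Series_le. intro m. split. apply cond_pos_sum; auto.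
    apply psum_le_lim; auto. exists S; auto. }
  assert (HexB : ex_series B) by (apply (ex_series_nonneg_bounded B S); auto).
  assert (HSB : Series B <= S).
  { apply (lim_le_bound B); auto. apply Series_correct; auto. }
  assert (HBS : S <= Series B).
  { apply (lim_le_bound A); auto. intro M.
    assert (E : sum_f_R0 A M = Series (fun k => sum_f_R0 (fun m => a m k) M)).
    { rewrite (Series_sum_f (fun k m => a m k) M).
      - apply sum_eq. intros. symmetry. apply is_series_unique. auto.
      - intro k. exists (A k). auto. }
    rewrite E. apply Series_le; auto. intro k. split. apply cond_pos_sum; auto.
    unfold B. apply (psum_le_lim (fun m => a m k)); auto. apply Series_correct; auto. }
  replace S with (Series B) by lra. apply Series_correct; auto.
Qed.

Lemma csum_sum f n : csum f n = sum_f_R0 f n.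
Proof. induction n; simpl; [reflexivity|rewrite IHn; reflexivity]. Qed.

Lemma is_series_const_partial (a : nat -> R) l : (forall N, sum_f_R0 a N = l) -> is_series a l.
Proof.
  intro H. apply is_series_Reals. intros e He. exists O. intros n _.
  rewrite H. unfold R_dist. rewrite Rminus_diag_eq, Rabs_R0; auto.
Qed.

Lemma delta0_pgf x : is_series (fun k => delta0 k * x ^ k) 1.
Proof.
  apply is_series_const_partial. induction N; simpl. ring. rewrite IHN. ring.
Qed.

Lemma conv_nonneg p q : (forall k, 0 <= p k) -> (forall k, 0 <= q k) -> forall k, 0 <= conv p q k.
Proof.
  intros. unfold conv. rewrite csum_sum. apply cond_pos_sum. intro. apply Rmult_le_pos; auto.
Qed.

Lemma convpow_nonneg p : (forall k, 0 <= p k) -> forall m k, 0 <= convpow p m k.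
Proof.
  intros Hp m. induction m; simpl; intros.
  - destruct k; simpl; lra.
  - apply conv_nonneg; auto.
Qed.

Lemma sum_mult_r (f : nat -> R) c N : sum_f_R0 f N * c = sum_f_R0 (fun i => f i * c) N.
Proof. induction N; simpl; [ring| rewrite <- IHN; ring]. Qed.

Lemma conv_pgf p q P Q x : (forall k, 0 <= p k) -> (forall k, 0 <= q k) -> 0 <= x ->
  is_series (fun k => p k * x ^ k) P -> is_series (fun k => q k * x ^ k) Q ->
  is_series (fun k => conv p q k * x ^ k) (P * Q).
Proof.
  intros Hp Hq Hx HP HQ.
  eapply is_series_ext; [|apply (is_series_mult_pos _ _ _ _ HP HQ)].
  - intro n. symmetry. unfold conv. rewrite csum_sum. rewrite sum_mult_r. apply sum_eq.
    intros i Hi. assert (E: x^n = x^i * x^(n-i)) by (rewrite <- pow_add; f_equal; lia). rewrite E; ring.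
  - intro; apply Rmult_le_pos; auto. apply pow_le; auto.
  - intro; apply Rmult_le_pos; auto. apply pow_le; auto.
Qed.

Lemma convpow_pgf p G x : (forall k, 0 <= p k) -> 0 <= x ->
  is_series (fun k => p k * x ^ k) G -> forall m,
  is_series (fun k => convpow p m k * x ^ k) (G ^ m).
Proof.
  intros Hp Hx HG m. induction m; simpl.
  - apply delta0_pgf.
  - apply conv_pgf; auto. apply convpow_nonneg; auto.
Qed.

Lemma is_pseries_series a x l : is_pseries a x l -> is_series (fun k => a k * x ^ k) l.
Proof.
  intro H. eapply is_series_ext; [|apply H]. intro n.
  rewrite pow_n_pow. apply Rmult_comm.
Qed.

Lemma series_pseries a x l : is_series (fun k => a k * x ^ k) l -> is_pseries a x l.
Proof.
  intro H. unfold is_pseries. eapply is_series_ext; [|apply H]. intro n.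
  rewrite pow_n_pow. apply Rmult_comm.
Qed.

Lemma radius_gt a x r M : Rabs x < r -> (forall n, Rabs (a n * r ^ n) <= M) ->
  Rbar_lt (Rabs x) (CV_radius a).
Proof.
  intros Hr HM. destruct (CV_radius_bounded a) as [Hub _].
  assert (H : Rbar_le r (CV_radius a)) by (apply Hub; exists M; auto).
  apply Rbar_lt_le_trans with r; auto.
Qed.

Lemma pow_le1 x n : 0 <= x <= 1 -> x ^ n <= 1.
Proof. intro H. rewrite <- (pow1 n). apply pow_incr. lra. Qed.

Lemma pow_le_anti x m n : 0 <= x <= 1 -> (m <= n)%nat -> x ^ n <= x ^ m.
Proof.
  intros Hx Hmn. replace n with (m + (n - m))%nat by lia. rewrite pow_add.
  rewrite <- (Rmult_1_r (x ^ m)) at 2. apply Rmult_le_compat_l. apply pow_le; lra.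
  apply pow_le1; auto.
Qed.

Definition lna (n : nat) : R := match n with O => 0 | S k => (-1) ^ k / INR (S k) end.

Lemma lna_bound n : Rabs (lna n) <= 1.
Proof.
  destruct n; unfold lna. rewrite Rabs_R0; lra.
  assert (HS : 1 <= INR (S n)) by (apply (le_INR 1); lia).
  unfold Rdiv. rewrite Rabs_mult, pow_1_abs, Rabs_Rinv, (Rabs_pos_eq (INR (S n))) by lra.
  rewrite Rmult_1_l. rewrite <- Rinv_1. apply Rinv_le_contravar; lra.
Qed.

Lemma lna_radius v : Rabs v < 1 -> Rbar_lt (Rabs v) (CV_radius lna).
Proof.
  intro Hv. apply radius_gt with ((Rabs v + 1)/2) 1. lra.
  intro n. rewrite Rabs_mult. rewrite <- (Rmult_1_r 1).
  pose proof (Rabs_pos v).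
  apply Rmult_le_compat; try apply Rabs_pos. apply lna_bound.
  rewrite <- RPow_abs. apply pow_le1. split. apply Rabs_pos.
  rewrite Rabs_pos_eq; lra.
Qed.

Lemma PS_derive_lna n : PS_derive lna n = (-1) ^ n.
Proof.
  unfold PS_derive, lna. field. apply not_0_INR. lia.
Qed.

Lemma geom_alt t : Rabs t < 1 -> PSeries (fun n => (-1) ^ n) t = / (1 + t).
Proof.
  intro Ht. rewrite PSeries_eq.
  rewrite (Series_ext _ (fun n => (- t) ^ n)).
  rewrite Series_geom. f_equal; ring. rewrite Rabs_Ropp; auto.
  intro n. rewrite pow_n_pow. unfold scal; simpl; unfold mult; simpl.
  rewrite <- (Rmult_1_l t) at 2. replace (- (1 * t)) with ((-1) * t) by ring.
  rewrite Rpow_mult_distr. ring.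
Qed.

Lemma ln_PSeries v : Rabs v < 1 -> PSeries lna v = ln (1 + v).
Proof.
  intro Hv.
  set (f := fun u => PSeries lna u - ln (1 + u)).
  assert (Hd : forall u, Rabs u < 1 -> is_derive f u 0).
  { intros u Hu. unfold f.
    replace 0 with (PSeries (PS_derive lna) u - / (1 + u)).
    apply (is_derive_minus (V:=R_NormedModule)).
    apply is_derive_PSeries. apply lna_radius; auto.
    assert (1 + u > 0) by (apply Rabs_def2 in Hu; lra).
    auto_derive. lra. field. lra.
    rewrite (PSeries_ext _ (fun n => (-1) ^ n)) by apply PS_derive_lna.
    rewrite geom_alt; auto. ring. }
  assert (H0 : f 0 = 0).
  { unfold f. rewrite PSeries_0. simpl. rewrite Rplus_0_r, ln_1. ring. }
  assert (Hfv : f v = 0).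
  { destruct (Rtotal_order v 0) as [Hlt|[Heq|Hgt]].
    - rewrite <- H0. apply (eq_is_derive f v 0); auto. intros u Hu.
      apply Hd. apply Rabs_def1; apply Rabs_def2 in Hv; lra.
    - subst; auto.
    - rewrite <- H0. symmetry. apply (eq_is_derive f 0 v); auto. intros u Hu.
      apply Hd. apply Rabs_def1; apply Rabs_def2 in Hv; lra. }
  unfold f in Hfv. lra.
Qed.

Lemma ln_series v : Rabs v < 1 -> is_series (fun k => lna k * v ^ k) (ln (1 + v)).
Proof.
  intro Hv. apply is_pseries_series. rewrite <- ln_PSeries; auto.
  apply PSeries_correct. apply CV_radius_inside. apply lna_radius; auto.
Qed.

Lemma ln2_lt_1 : ln 2 < 1.
Proof.
  rewrite <- ln_exp with 1. apply ln_increasing. lra.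
  pose proof (exp_ineq1 1). lra.
Qed.

Lemma ln2_pos : 0 < ln 2.
Proof. rewrite <- ln_1. apply ln_increasing; lra. Qed.

(* -ln(1 - x/2) = sum_{k>=1} x^k/(k 2^k) *)
Definition hc (k : nat) : R := match k with O => 0 | S j => / (INR (S j) * 2 ^ (S j)) end.

Lemma hc_lna k x : - (lna k * (- x / 2) ^ k) = hc k * x ^ k.
Proof.
  destruct k as [|j]; unfold lna, hc. simpl. ring.
  replace (- x / 2) with ((-1) * (x / 2)) by field.
  rewrite Rpow_mult_distr. unfold Rdiv. rewrite Rpow_mult_distr, pow_inv.
  assert (E : (-1) ^ j * (-1) ^ S j = -1).
  { simpl. replace ((-1) ^ j * (-1 * (-1) ^ j)) with (- ((-1)*(-1))^j)
      by (rewrite Rpow_mult_distr; ring). replace ((-1)*(-1)) with 1 by ring.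
    rewrite pow1; ring. }
  assert (INR (S j) <> 0) by (apply not_0_INR; lia).
  assert (2 ^ S j <> 0) by (apply pow_nonzero; lra).
  rewrite Rinv_mult.
  transitivity (- ((-1) ^ j * (-1) ^ S j) * / INR (S j) * x ^ S j * / 2 ^ S j); [ring|].
  rewrite E. ring.
Qed.

Lemma hc_series x : 0 <= x < 2 -> is_series (fun k => hc k * x ^ k) (- ln (1 - x / 2)).
Proof.
  intro Hx.
  assert (Hs : is_series (fun k => lna k * (- x / 2) ^ k) (ln (1 - x / 2))).
  { replace (1 - x / 2) with (1 + (- x / 2)) by field.
    apply ln_series. rewrite Rabs_left1; lra. }
  apply (is_series_opp (V:=R_NormedModule)) in Hs.
  eapply is_series_ext; [|apply Hs]. intro k. apply hc_lna.
Qed.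

Lemma hc_nonneg k : 0 <= hc k.
Proof.
  destruct k; unfold hc. lra. left. apply Rinv_0_lt_compat.
  apply Rmult_lt_0_compat. apply lt_0_INR; lia. apply pow_lt; lra.
Qed.

Definition hp (n : nat) (k : nat) : R :=
  match k with O => 1 - ln 2 / INR n | S _ => hc k / INR n end.

Lemma Hn_eq n x : (1 <= n)%nat -> 0 <= x <= 1 ->
  Hn n x = (1 - ln 2 / INR n) + (- ln (1 - x / 2)) / INR n.
Proof.
  intros Hn1 Hx. unfold Hn, H.
  replace (2 - x) with (2 * (1 - x / 2)) by field. rewrite ln_mult by lra.
  field. apply not_0_INR. lia.
Qed.

Lemma hp_pgf n : (1 <= n)%nat -> has_pgf (hp n) (Hn n).
Proof.
  intros Hn1 x Hx. apply is_series_Reals. rewrite Hn_eq; auto.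
  eapply is_series_ext; [|apply (is_series_plus (V:=R_NormedModule)
     (fun k => delta0 k * x ^ k * (1 - ln 2 / INR n)) (fun k => hc k * x ^ k / INR n))].
  - intro k. assert (Hn0 : INR n <> 0) by (apply not_0_INR; lia). unfold plus; simpl. destruct k; unfold hp; unfold hc; cbn [delta0]; field; repeat split; auto; try (apply pow_nonzero; lra); apply not_0_INR; lia.
  - pose proof (is_series_scal_r (1 - ln 2 / INR n) _ _ (delta0_pgf x)) as Hd.
    rewrite Rmult_1_l in Hd. exact Hd.
  - unfold Rdiv. apply is_series_scal_r. apply hc_series; lra.
Qed.

Lemma part1 : forall n : nat, (1 <= n)%nat -> is_pgf (Hn n).
Proof.
  intros n Hn1. exists (hp n). split; [split|]; auto using hp_pgf.
  - intro k. assert (1 <= INR n) by (apply (le_INR 1); auto).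
    destruct k; unfold hp.
    + pose proof ln2_lt_1. pose proof ln2_pos.
      assert (ln 2 / INR n <= 1); [|lra].
      apply Rmult_le_reg_r with (INR n). lra. unfold Rdiv.
      rewrite Rmult_assoc, Rinv_l; lra.
    + unfold Rdiv. apply Rmult_le_pos. apply hc_nonneg. left; apply Rinv_0_lt_compat; lra.
  - assert (E : Hn n 1 = 1).
    { unfold Hn, H. replace (2 - 1) with 1 by ring. rewrite ln_1. field. apply not_0_INR; lia. }
    pose proof (hp_pgf n Hn1 1 ltac:(lra)) as Hs. rewrite E in Hs.
    apply is_series_Reals. eapply is_series_ext; [|apply is_series_Reals; apply Hs].
    intro k. cbv beta. rewrite pow1. apply Rmult_1_r.
Qed.

Definition fd (n i : nat) (x : R) : R := INR (fact (i - 1)) / INR n / (2 - x) ^ i.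

Lemma fd_deriv n i x : (1 <= i)%nat -> (1 <= n)%nat -> 0 < x < 2 ->
  derivable_pt_lim (fd n i) x (fd n (S i) x).
Proof.
  intros Hi Hn Hx. apply is_derive_Reals. unfold fd.
  destruct i as [|j]; [lia|].
  replace (S j - 1)%nat with j by lia. replace (S (S j) - 1)%nat with (S j) by lia.
  assert (INR n <> 0) by (apply not_0_INR; lia).
  assert (2 - x <> 0) by lra.
  assert ((2 - x) ^ j <> 0) by (apply pow_nonzero; lra).
  auto_derive.
  - apply Rmult_integral_contrapositive_currified; [lra|apply pow_nonzero; lra].
  - rewrite fact_simpl, mult_INR. simpl pow.
    replace (match j with 0%nat => 1 | S _ => INR j + 1 end) with (INR (S j)) by reflexivity.
    match goal with |- ?a = ?b => change (@eq R a b) end.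
    replace (2 + - x) with (2 - x) by ring. set (y := 2 - x) in *. set (z := y ^ j) in *. field. repeat split; auto.
Qed.

Lemma fd_tail n : (1 <= n)%nat -> forall j i, (1 <= i)%nat ->
  nth_deriv (fun x => 0 < x < 2) j (fd n i) (fd n (i + j)).
Proof.
  intros Hn j. induction j; intros i Hi.
  - rewrite Nat.add_0_r. constructor.
  - apply nth_derivS with (fd n (S i)).
    + intros x Hx. apply fd_deriv; auto.
    + replace (i + S j)%nat with (S i + j)%nat by lia. apply IHj. lia.
Qed.

Lemma Hn_deriv n x : (1 <= n)%nat -> 0 < x < 2 -> derivable_pt_lim (Hn n) x (fd n 1 x).
Proof.
  intros Hn1 Hx. apply is_derive_Reals. unfold Hn, H, fd.
  assert (INR n <> 0) by (apply not_0_INR; lia).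
  auto_derive. lra.
  match goal with |- ?a = ?b => change (@eq R a b) end.
  simpl. field. split; auto. lra.
Qed.

Lemma part2 : forall k : nat, (1 <= k)%nat ->
     exists d : nat -> R -> R,
       (forall n : nat, (1 <= n)%nat -> nth_deriv (fun x => 0 < x < 2) k (Hn n) (d n)) /\
       Un_cv (fun m => d (S m) 1 / (INR k * (1 - rho (S m))))
             (INR (fact (k - 1)) / INR k).
Proof.
  intros k Hk. exists (fun n => fd n k). split.
  - intros n Hn1. destruct k as [|k']; [lia|].
    apply nth_derivS with (fd n 1).
    + intros x Hx. apply Hn_deriv; auto.
    + apply (fd_tail n Hn1 k' 1). lia.
  - intros e He. exists O. intros m _. unfold R_dist, fd, rho.
    replace (2 - 1) with 1 by ring. rewrite pow1.
    assert (INR (S m) <> 0) by (apply not_0_INR; lia).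
    assert (INR k <> 0) by (apply not_0_INR; lia).
    set (u := INR (S m)) in *. set (v := INR k) in *. set (w := INR (fact (k - 1))).
    replace (1 - (1 - / u)) with (/ u) by ring. match goal with |- Rabs ?a < _ => replace a with 0 by (field; auto) end.
    rewrite Rabs_R0; auto.
Qed.

Lemma psum_eq j : psum j = sum_f_R0 hc (pred j).
Proof.
  induction j as [|j IH].
  - simpl. unfold hc. reflexivity.
  - destruct j as [|i].
    + simpl. unfold hc. ring.
    + change (psum (S (S i))) with (psum (S i) + hc (S i)).
      rewrite IH. simpl pred. simpl sum_f_R0. reflexivity.
Qed.

Lemma ln2_series : is_series hc (ln 2).
Proof.
  pose proof (hc_series 1 ltac:(lra)) as H1.
  replace (- ln (1 - 1 / 2)) with (ln 2) in H1.
  eapply is_series_ext; [|apply H1]. intro k. cbv beta. rewrite pow1. apply Rmult_1_r.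
  replace (1 - 1/2) with (/ 2) by field. rewrite ln_Rinv by lra. ring.
Qed.

Definition cc (j : nat) : R := ln 2 - psum j.

Lemma cc_series j : is_series (fun i => hc (j + i)) (cc j).
Proof.
  destruct j as [|j].
  - unfold cc. simpl psum. rewrite Rminus_0_r. apply ln2_series.
  - apply is_series_incr_n. lia. unfold cc. rewrite sum_n_Reals, <- psum_eq.
    match goal with |- is_series _ ?l => replace l with (ln 2) end.
    apply ln2_series. unfold plus; simpl. ring.
Qed.

Lemma hc_le_geom k : hc k <= (/ 2) ^ k.
Proof.
  destruct k. simpl. unfold hc. lra.
  unfold hc. rewrite pow_inv. rewrite Rinv_mult.
  rewrite <- (Rmult_1_l (/ 2 ^ S k)) at 2. apply Rmult_le_compat_r.
  left; apply Rinv_0_lt_compat, pow_lt; lra.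
  rewrite <- Rinv_1. apply Rinv_le_contravar. lra. apply (le_INR 1); lia.
Qed.

Lemma series_le_comp (a b : nat -> R) la lb : (forall n, 0 <= a n <= b n) ->
  is_series a la -> is_series b lb -> la <= lb.
Proof.
  intros Hab Ha Hb. rewrite <- (is_series_unique _ _ Ha), <- (is_series_unique _ _ Hb).
  apply Series_le; auto. exists lb; auto.
Qed.

Lemma cc_bound j : 0 <= cc j <= 2 * (/ 2) ^ j.
Proof.
  split.
  - apply (series_ge0 (fun i => hc (j + i))). intro; apply hc_nonneg. apply cc_series.
  - apply (series_le_comp (fun i => hc (j + i)) (fun i => (/ 2) ^ j * (/ 2) ^ i)).
    + intro n. split. apply hc_nonneg. rewrite <- pow_add. apply hc_le_geom.
    + apply cc_series.
    + replace (2 * (/ 2) ^ j) with ((/ 2) ^ j * / (1 - / 2)) by field.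
      apply (is_series_scal_l (V:=R_NormedModule)).
      apply is_series_geom. rewrite Rabs_pos_eq; lra.
Qed.

Lemma cc_succ j : cc (S j) = cc j - hc j.
Proof. unfold cc. rewrite !psum_eq. destruct j. simpl. unfold hc; ring. simpl. ring. Qed.

Lemma mu_eq j : (1 <= j)%nat -> mu j = cc j / INR j.
Proof. intros. unfold mu, cc. unfold Rdiv. ring. Qed.

Definition mub (j : nat) : R := match j with O => 0 | S _ => mu j end.

Lemma mub_bound j : 0 <= mub j <= 2 * (/ 2) ^ j.
Proof.
  destruct j as [|j]. simpl. lra.
  unfold mub. rewrite mu_eq by lia. pose proof (cc_bound (S j)).
  assert (1 <= INR (S j)) by (apply (le_INR 1); lia).
  split. unfold Rdiv; apply Rmult_le_pos; [lra|]. left; apply Rinv_0_lt_compat; lra.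
  apply Rle_trans with (cc (S j)); [|lra].
  unfold Rdiv. rewrite <- (Rmult_1_r (cc (S j))) at 2. apply Rmult_le_compat_l. lra.
  rewrite <- Rinv_1. apply Rinv_le_contravar; lra.
Qed.

Lemma mub_radius x : Rabs x < 2 -> Rbar_lt (Rabs x) (CV_radius mub).
Proof.
  intro Hx. apply radius_gt with ((Rabs x + 2) / 2) 2. lra.
  intro n. pose proof (Rabs_pos x). rewrite Rabs_mult.
  rewrite (Rabs_pos_eq (mub n)) by apply mub_bound.
  rewrite <- RPow_abs. rewrite (Rabs_pos_eq ((Rabs x + 2) / 2)) by lra.
  apply Rle_trans with (2 * (/ 2) ^ n * ((Rabs x + 2) / 2) ^ n).
  apply Rmult_le_compat_r. apply pow_le; lra. apply mub_bound.
  rewrite Rmult_assoc, <- Rpow_mult_distr.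
  apply Rle_trans with (2 * 1); [|lra].
  apply Rmult_le_compat_l. lra. apply pow_le1. split.
  apply Rmult_le_pos; lra. apply Rmult_le_reg_l with 2. lra. field_simplify; lra.
Qed.

Lemma PS_derive_mub j : PS_derive mub j = cc (S j).
Proof.
  unfold PS_derive, mub. rewrite mu_eq by lia. field. apply not_0_INR; lia.
Qed.

Definition ilog (k : nat) : R := match k with O => 0 | S j => / INR (S j) end.

Lemma ilog_lna k y : - (lna k * (- y) ^ k) = ilog k * y ^ k.
Proof.
  destruct k as [|j]; unfold lna, ilog. simpl. ring.
  replace (- y) with ((-1) * y) by ring. rewrite Rpow_mult_distr.
  assert (E : (-1) ^ j * (-1) ^ S j = -1).
  { simpl. replace ((-1) ^ j * (-1 * (-1) ^ j)) with (- ((-1)*(-1))^j)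
      by (rewrite Rpow_mult_distr; ring). replace ((-1)*(-1)) with 1 by ring.
    rewrite pow1; ring. }
  unfold Rdiv.
  transitivity (- ((-1) ^ j * (-1) ^ S j) * / INR (S j) * y ^ S j); [ring|].
  rewrite E. ring.
Qed.

Lemma ilog_series y : Rabs y < 1 -> is_series (fun k => ilog k * y ^ k) (- ln (1 - y)).
Proof.
  intro Hy.
  assert (Hs : is_series (fun k => lna k * (- y) ^ k) (ln (1 - y))).
  { replace (1 - y) with (1 + (- y)) by ring. apply ln_series. rewrite Rabs_Ropp; auto. }
  apply (is_series_opp (V:=R_NormedModule)) in Hs.
  eapply is_series_ext; [|apply Hs]. intro k. apply ilog_lna.
Qed.

Ltac rring := match goal with |- ?a = ?b => change (@eq R a b) end; ring.

Lemma is_series_uniq (a : nat -> R) l1 l2 : is_series a l1 -> is_series a l2 -> l1 = l2.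
Proof. intros H1 H2. rewrite <- (is_series_unique _ _ H1). apply is_series_unique; auto. Qed.

Lemma is_series_shift1 (a : nat -> R) l : is_series a l -> a O = 0 -> is_series (fun k => a (S k)) l.
Proof.
  intros H H0. apply is_series_incr_1. replace (plus l (a O)) with l. auto.
  rewrite H0. apply eq_sym, Rplus_0_r.
Qed.

Definition sqa (l : nat) : R := match l with O => 0 | S k => / (INR (S k)) ^ 2 end.

Lemma sqa_radius y : Rabs y < 1 -> Rbar_lt (Rabs y) (CV_radius sqa).
Proof.
  intro Hy. apply radius_gt with ((Rabs y + 1) / 2) 1. lra.
  intro n. pose proof (Rabs_pos y). rewrite Rabs_mult, <- RPow_abs.
  rewrite (Rabs_pos_eq ((Rabs y + 1) / 2)) by lra.
  apply Rle_trans with (1 * 1); [|lra].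
  apply Rmult_le_compat; [apply Rabs_pos | apply pow_le; lra | |].
  - destruct n; cbn [sqa]. rewrite Rabs_R0; lra.
    assert (1 <= INR (S n)) by (apply (le_INR 1); lia).
    replace (INR (S n) ^ 2) with (INR (S n) * INR (S n)) by ring.
    rewrite Rabs_pos_eq. rewrite <- Rinv_1. apply Rinv_le_contravar. lra.
    nra. left; apply Rinv_0_lt_compat. nra.
  - apply pow_le1. lra.
Qed.

Lemma PS_derive_sqa l : PS_derive sqa l = ilog (S l).
Proof. unfold PS_derive, sqa, ilog. assert (INR (S l) <> 0) by (apply not_0_INR; lia).
  set (u := INR (S l)) in *. field. auto. Qed.

Lemma A_deriv x : 0 < x < 2 ->
  is_derive (fun x => PSeries sqa (x - 1)) x (PSeries (fun l => ilog (S l)) (x - 1)).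
Proof.
  intro Hx.
  assert (Hr : Rbar_lt (Rabs (x - 1)) (CV_radius sqa)).
  { apply sqa_radius. apply Rabs_def1; lra. }
  pose proof (is_derive_PSeries sqa (x - 1) Hr) as Hd.
  rewrite (PSeries_ext _ (fun l => ilog (S l))) in Hd by apply PS_derive_sqa.
  assert (Hg : is_derive (fun x : R => x - 1) x 1).
  { auto_derive. auto. ring. }
  pose proof (is_derive_comp (PSeries sqa) (fun x => x - 1) x _ _ Hd Hg) as Hc.
  replace (PSeries (fun l : nat => ilog (S l)) (x - 1))
    with (scal 1 (PSeries (fun l : nat => ilog (S l)) (x - 1))). exact Hc.
  unfold scal; simpl; unfold mult; simpl. apply Rmult_1_l.
Qed.

Lemma Aprime_val x : 0 < x < 1 ->
  (x - 1) * PSeries (fun l => ilog (S l)) (x - 1) = - ln (2 - x).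
Proof.
  intro Hx. rewrite <- PSeries_incr_1.
  rewrite (PSeries_ext _ ilog).
  - apply is_pseries_unique. apply series_pseries.
    replace (2 - x) with (1 - (x - 1)) by ring. apply ilog_series.
    apply Rabs_def1; lra.
  - intro n; destruct n; reflexivity.
Qed.

Definition dd (j : nat) : R := cc (S j).

Lemma dd_radius x : Rabs x < 2 -> Rbar_lt (Rabs x) (CV_radius dd).
Proof.
  intro Hx. rewrite (CV_radius_ext dd (PS_derive mub)).
  rewrite CV_radius_derive. apply mub_radius; auto.
  intro n. rewrite PS_derive_mub. reflexivity.
Qed.

Lemma Bprime_val x : 0 < x < 1 -> (1 - x) * PSeries dd x = ln (2 - x).
Proof.
  intro Hx.
  assert (Hr : Rbar_lt (Rabs x) (CV_radius dd)) by (apply dd_radius; apply Rabs_def1; lra).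
  pose proof (PSeries_correct dd x (CV_radius_inside _ _ Hr)) as H1.
  apply is_pseries_series in H1. set (S1 := PSeries dd x) in *.
  assert (H2 : is_series (fun j => match j with O => 0 | S i => dd i * x ^ S i end) (x * S1)).
  { apply is_series_decr_1. simpl.
    match goal with |- is_series _ ?l => replace l with (scal x S1) end.
    2:{ unfold plus, opp, scal; simpl. unfold mult; simpl. change (x * S1 = x * S1 + - 0). ring. }
    eapply is_series_ext; [|apply (is_series_scal_l (V:=R_NormedModule) x _ _ H1)].
    intro n. unfold scal; simpl; unfold mult; simpl. ring. }
  assert (H3 := is_series_minus (V:=R_NormedModule) _ _ _ _ H1 H2).
  assert (H4 : is_series (fun j => ln 2 * delta0 j * x ^ j - hc j * x ^ j) (ln 2 - - ln (1 - x / 2))).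
  { apply (is_series_minus (V:=R_NormedModule)).
    - pose proof (is_series_scal_r (ln 2) _ _ (delta0_pgf x)) as Hd.
      rewrite Rmult_1_l in Hd.
      eapply is_series_ext; [|apply Hd].
      intro n. cbv beta. rring.
    - apply hc_series. lra. }
  assert (E : S1 - x * S1 = ln 2 - - ln (1 - x / 2)).
  { eapply is_series_uniq. exact H3. eapply is_series_ext; [|apply H4].
    intro n. destruct n as [|i].
    - simpl. unfold dd, cc. rewrite psum_eq. simpl. unfold hc, plus, opp; simpl. ring.
    - unfold dd. rewrite (cc_succ (S i)). cbn [delta0]. unfold plus, opp; simpl. ring. }
  replace (2 - x) with (2 * (1 - x / 2)) by field. rewrite ln_mult by lra.
  replace ((1 - x) * S1) with (S1 - x * S1) by ring. rewrite E. ring.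
Qed.

Definition Dfun (x : R) : R := PSeries sqa (x - 1) - PSeries mub x.

Lemma Dfun_deriv x : 0 < x < 1 -> is_derive Dfun x 0.
Proof.
  intro Hx. unfold Dfun.
  replace 0 with (PSeries (fun l => ilog (S l)) (x - 1) - PSeries dd x).
  - apply (is_derive_minus (V:=R_NormedModule)). apply A_deriv; lra.
    rewrite (PSeries_ext dd (PS_derive mub)).
    apply is_derive_PSeries. apply mub_radius. apply Rabs_def1; lra.
    intro n. rewrite PS_derive_mub. reflexivity.
  - pose proof (Aprime_val x Hx). pose proof (Bprime_val x Hx).
    assert (x - 1 <> 0) by lra.
    apply Rmult_eq_reg_l with (x - 1); auto.
    rewrite Rmult_minus_distr_l, H. replace ((x - 1) * PSeries dd x) with (- ((1 - x) * PSeries dd x)) by ring.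
    rewrite H0. ring.
Qed.

Lemma Dfun_cont1 : continuity_pt Dfun 1.
Proof.
  unfold Dfun. apply continuity_pt_minus.
  - apply (continuity_pt_comp (fun x => x - 1) (PSeries sqa)).
    + apply continuity_pt_minus. apply continuity_pt_id. apply continuity_pt_const. intros a b; auto.
    + apply PSeries_continuity. replace (1 - 1) with 0 by ring. apply sqa_radius.
      rewrite Rabs_R0; lra.
  - apply PSeries_continuity. apply mub_radius. rewrite Rabs_R1; lra.
Qed.

Lemma Dfun_const x : 0 < x < 1 -> Dfun x = Dfun 1.
Proof.
  intro Hx. apply cond_eq. intros eps Heps.
  destruct (Dfun_cont1 eps Heps) as [alp [Halp Hc]].
  set (y := 1 - Rmin alp (1 - x) / 2).
  assert (Hmin1 : Rmin alp (1 - x) <= alp) by apply Rmin_l.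
  assert (Hmin2 : Rmin alp (1 - x) <= 1 - x) by apply Rmin_r.
  assert (Hmin0 : 0 < Rmin alp (1 - x)) by (apply Rmin_glb_lt; lra).
  assert (Hxy : Dfun x = Dfun y).
  { apply (eq_is_derive Dfun x y). intros t Ht. apply Dfun_deriv. unfold y in Ht. lra.
    unfold y; lra. }
  rewrite Hxy. apply Hc. split. unfold D_x, no_cond; split; auto. unfold y. lra.
  simpl. unfold R_dist, y. rewrite Rabs_left; lra.
Qed.

Lemma part4_identity x : 0 < x < 1 -> PSeries sqa (x - 1) = PSeries mub x - PSeries mub 1.
Proof.
  intro Hx. pose proof (Dfun_const x Hx) as H. unfold Dfun in H.
  replace (1 - 1) with 0 in H by ring. rewrite PSeries_0 in H. simpl in H. lra.
Qed.

Lemma mub_series x : Rabs x < 2 -> is_series (fun j => mu (S j) * x ^ S j) (PSeries mub x).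
Proof.
  intro Hx. apply (is_series_shift1 (fun j => mub j * x ^ j)).
  apply is_pseries_series. apply PSeries_correct. apply CV_radius_inside. apply mub_radius; auto.
  simpl. ring.
Qed.

Lemma part4 : forall x : R, 0 < x < 1 ->
     exists s0 : R,
       infinite_sum (fun l => (x - 1) ^ (S l) / (INR (S l)) ^ 2) s0 /\
       infinite_sum (fun j => mu (S j) * (x ^ (S j) - 1)) s0.
Proof.
  intros x Hx. exists (PSeries sqa (x - 1)). split.
  - apply is_series_Reals.
    eapply is_series_ext; [|apply (is_series_shift1 (fun l => sqa l * (x - 1) ^ l))].
    intro n. unfold sqa, Rdiv. rring.
    + apply is_pseries_series. apply PSeries_correct. apply CV_radius_inside.
      apply sqa_radius. apply Rabs_def1; lra.
    + simpl. ring.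
  - apply is_series_Reals. rewrite part4_identity by auto.
    eapply is_series_ext; [|apply (is_series_minus (V:=R_NormedModule)); apply mub_series].
    intro n. cbv beta. rewrite pow1. unfold plus, opp; simpl. ring.
    apply Rabs_def1; lra. rewrite Rabs_R1; lra.
Qed.


Fixpoint sum1 (F : nat -> R) (n : nat) : R :=
  match n with O => 0 | S m => sum1 F m + F (S m) end.

Lemma sum1_S F n : sum1 F (S n) = sum1 F n + F (S n).
Proof. reflexivity. Qed.

Lemma sum1_ext F G n : (forall k, (1 <= k <= n)%nat -> F k = G k) -> sum1 F n = sum1 G n.
Proof. induction n; intro H; simpl; auto. rewrite IHn, H; [reflexivity|lia|]. intros; apply H; lia. Qed.

Lemma sum1_plus F G n : sum1 (fun k => F k + G k) n = sum1 F n + sum1 G n.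
Proof. induction n; simpl. ring. rewrite IHn. ring. Qed.

Lemma sum1_minus F G n : sum1 (fun k => F k - G k) n = sum1 F n - sum1 G n.
Proof. induction n; simpl. ring. rewrite IHn. ring. Qed.

Lemma sum1_scal c F n : sum1 (fun k => c * F k) n = c * sum1 F n.
Proof. induction n; simpl. ring. rewrite IHn. ring. Qed.

Lemma sum1_const c n : sum1 (fun _ => c) n = INR n * c.
Proof. induction n; simpl sum1. simpl; ring. rewrite IHn, S_INR. ring. Qed.

Lemma sum1_le F G n : (forall k, (1 <= k <= n)%nat -> F k <= G k) -> sum1 F n <= sum1 G n.
Proof. induction n; intro H; simpl. lra. apply Rplus_le_compat. apply IHn; intros; apply H; lia. apply H; lia. Qed.

Lemma sum1_nonneg F n : (forall k, (1 <= k <= n)%nat -> 0 <= F k) -> 0 <= sum1 F n.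
Proof. intro H. replace 0 with (sum1 (fun _ => 0) n). apply sum1_le; auto.
  rewrite sum1_const; ring. Qed.

Lemma sum1_abs F n : Rabs (sum1 F n) <= sum1 (fun k => Rabs (F k)) n.
Proof. induction n; simpl. rewrite Rabs_R0; lra.
  eapply Rle_trans. apply Rabs_triang. lra. Qed.

Lemma sum1_mono F n m : (forall k, 0 <= F k) -> (n <= m)%nat -> sum1 F n <= sum1 F m.
Proof.
  intros HF Hnm. induction Hnm. lra. simpl. specialize (HF (S m)). lra.
Qed.

Lemma sum1_series (f : nat -> nat -> R) (S : nat -> R) n :
  (forall k, (1 <= k <= n)%nat -> is_series (f k) (S k)) ->
  is_series (fun l => sum1 (fun k => f k l) n) (sum1 S n).
Proof.
  induction n; intro H; simpl.
  - apply is_series_const_partial. intro N; induction N; simpl; [ring|rewrite IHN; ring].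
  - apply (is_series_plus (V:=R_NormedModule)). apply IHn. intros; apply H; lia. apply H; lia.
Qed.

Lemma tannery (f : nat -> nat -> R) (g M : nat -> R) SM :
  (forall n l, Rabs (f n l) <= M l) -> is_series M SM ->
  (forall l, Un_cv (fun n => f n l) (g l)) ->
  Un_cv (fun n => Series (f n)) (Series g).
Proof.
  intros Hb HM Hl.
  assert (HM0 : forall l, 0 <= M l) by (intro l; eapply Rle_trans; [apply Rabs_pos|apply (Hb O)]).
  assert (Hg : forall l, Rabs (g l) <= M l).
  { intro l. pose proof (Hl l) as H. apply is_lim_seq_Reals in H.
    apply is_lim_seq_abs in H.
    apply (is_lim_seq_le (fun n => Rabs (f n l)) (fun _ => M l) (Rabs (g l)) (M l)); auto.
    apply is_lim_seq_const. }
  assert (HexM : ex_series M) by (exists SM; auto).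
  assert (Hexf : forall n, ex_series (f n)).
  { intro n. apply (ex_series_le (V:=R_CompleteNormedModule)) with M; auto. }
  assert (Hexg : ex_series g) by (apply (ex_series_le (V:=R_CompleteNormedModule)) with M; auto).
  intros eps Heps.
  pose proof HM as HM'. apply is_series_Reals in HM'.
  destruct (HM' (eps / 4)) as [L HL]. lra.
  specialize (HL L (Nat.le_refl L)). unfold R_dist in HL.
  assert (Hfin : Un_cv (fun n => sum_f_R0 (fun l => f n l - g l) L) 0).
  { clear HL. induction L; simpl.
    - replace 0 with (g O - g O) by ring. apply CV_minus. apply Hl. intros e He; exists O; intros; unfold R_dist; rewrite Rminus_diag_eq, Rabs_R0; auto.
    - replace 0 with (0 + (g (S L) - g (S L))) by ring. apply CV_plus. apply IHL.
      apply CV_minus. apply Hl. intros e He; exists O; intros; unfold R_dist; rewrite Rminus_diag_eq, Rabs_R0; auto. }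
  destruct (Hfin (eps / 2)) as [N HN]. lra.
  exists N. intros n Hn. specialize (HN n Hn). unfold R_dist in *. rewrite Rminus_0_r in HN.
  assert (Hexd : ex_series (fun l => f n l - g l)).
  { apply (ex_series_minus (V:=R_NormedModule)); auto. }
  rewrite <- Series_minus by auto.
  rewrite (Series_incr_n _ (S L)) by (auto || lia). simpl pred.
  assert (Htail : Rabs (Series (fun k => f n (S L + k)%nat - g (S L + k)%nat)) <= 2 * (SM - sum_f_R0 M L)).
  { assert (HexMt : ex_series (fun k => M (S L + k)%nat)) by (apply ex_series_incr_n; auto).
    assert (EM : Series (fun k => M (S L + k)%nat) = SM - sum_f_R0 M L).
    { rewrite <- (is_series_unique _ _ HM). rewrite (Series_incr_n M (S L)) by (auto || lia). simpl pred. ring. }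
    eapply Rle_trans. apply Series_Rabs.
    apply (ex_series_le (V:=R_CompleteNormedModule)) with (fun k => 2 * M (S L + k)%nat).
    intro k. unfold norm; simpl. rewrite Rabs_Rabsolu. unfold Rminus; eapply Rle_trans; [apply Rabs_triang|]; rewrite Rabs_Ropp.
    pose proof (Hb n (S L + k)%nat). pose proof (Hg (S L + k)%nat). simpl in H, H0 |- *. lra.
    apply (ex_series_scal_l (V:=R_NormedModule)) with (c := 2). auto.
    rewrite <- EM, <- Series_scal_l. apply Series_le.
    intro k. split. apply Rabs_pos. unfold Rminus; eapply Rle_trans; [apply Rabs_triang|]; rewrite Rabs_Ropp.
    pose proof (Hb n (S L + k)%nat). pose proof (Hg (S L + k)%nat). simpl in H, H0 |- *. lra.
    apply (ex_series_scal_l (V:=R_NormedModule)) with (c := 2). auto. }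
  eapply Rle_lt_trans. apply Rabs_triang. 
  assert (Hp : 0 <= SM - sum_f_R0 M L).
  { pose proof (psum_le_lim M SM HM0 HM L). lra. }

  rewrite Rabs_minus_sym, Rabs_pos_eq in HL by lra. lra.
Qed.

Lemma pow_diff (a b : R) m : 0 <= b <= a ->
  INR (S m) * b ^ m * (a - b) <= a ^ S m - b ^ S m <= INR (S m) * a ^ m * (a - b).
Proof.
  intro Hab. induction m as [|m IH].
  - simpl. lra.
  - assert (Hbm : 0 <= b ^ m) by (apply pow_le; lra).
    assert (Hbam : b ^ m <= a ^ m) by (apply pow_incr; lra).
    assert (Ham : 0 <= a ^ m) by lra.
    assert (E : a ^ S (S m) - b ^ S (S m) = a * (a ^ S m - b ^ S m) + b ^ S m * (a - b)) by (simpl; ring).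
    rewrite E. rewrite !S_INR in *. simpl pow in *.
    assert (HSm : 0 <= INR m) by apply pos_INR.
    destruct IH as [IH1 IH2].
    split.
    + assert (a * ((INR m + 1) * b ^ m * (a - b)) <= a * (a * a ^ m - b * b ^ m)) by (apply Rmult_le_compat_l; lra).
      assert (b * ((INR m + 1) * b ^ m * (a - b)) <= a * ((INR m + 1) * b ^ m * (a - b))).
      { apply Rmult_le_compat_r; [|lra]. apply Rmult_le_pos; [|lra]. apply Rmult_le_pos; lra. }
      nra.
    + assert (a * (a * a ^ m - b * b ^ m) <= a * ((INR m + 1) * a ^ m * (a - b))) by (apply Rmult_le_compat_l; lra).
      assert (b * b ^ m * (a - b) <= a * a ^ m * (a - b)).
      { apply Rmult_le_compat_r. lra. apply Rmult_le_compat; lra. }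
      nra.
Qed.

Lemma telescope (h : R -> R) n : sum1 (fun k => h (INR k) - h (INR k - 1)) n = h (INR n) - h 0.
Proof.
  induction n. simpl. ring. rewrite sum1_S, IHn.
  replace (INR (S n) - 1) with (INR n) by (rewrite S_INR; ring). ring.
Qed.

Definition cl (l n : nat) : R := sum1 (fun k => (INR k / INR n) ^ l / INR k) n.

Lemma cl_bounds m n : (1 <= n)%nat ->
  / INR (S m) <= cl (S m) n <= / INR (S m) + / INR n.
Proof.
  intro Hn.
  assert (Hn0 : 0 < INR n) by (apply lt_0_INR; lia).
  assert (HS0 : 0 < INR (S m)) by (apply lt_0_INR; lia).
  set (U := sum1 (fun k => INR k ^ m) n).
  set (V := sum1 (fun k => (INR k - 1) ^ m) n).
  assert (Ecl : cl (S m) n = U / INR n ^ S m).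
  { transitivity (/ INR n ^ S m * U); [|unfold Rdiv; ring].
    unfold cl, U. rewrite <- sum1_scal. apply sum1_ext.
    intros k Hk. assert (0 < INR k) by (apply lt_0_INR; lia).
    unfold Rdiv. rewrite Rpow_mult_distr, pow_inv. simpl pow.
    assert (INR n ^ m <> 0) by (apply pow_nonzero; lra).
    set (a := INR k ^ m). set (b := INR n ^ m) in *. field. repeat split; lra. }
  assert (Htel : sum1 (fun k => INR k ^ S m - (INR k - 1) ^ S m) n = INR n ^ S m).
  { rewrite (telescope (fun y => y ^ S m)). simpl. ring. }
  assert (Hup : INR (S m) * V <= INR n ^ S m).
  { rewrite <- Htel. unfold V. rewrite <- sum1_scal. apply sum1_le. intros k Hk.
    assert (1 <= INR k) by (apply (le_INR 1); lia).
    pose proof (pow_diff (INR k) (INR k - 1) m ltac:(lra)). lra. }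
  assert (Hlo : INR n ^ S m <= INR (S m) * U).
  { rewrite <- Htel. unfold U. rewrite <- sum1_scal. apply sum1_le. intros k Hk.
    assert (1 <= INR k) by (apply (le_INR 1); lia).
    pose proof (pow_diff (INR k) (INR k - 1) m ltac:(lra)). lra. }
  assert (HUV : U - V <= INR n ^ m).
  { unfold U, V. rewrite <- sum1_minus. rewrite (telescope (fun y => y ^ m)).
    assert (0 <= 0 ^ m) by (apply pow_le; lra). lra. }
  assert (Hnp : 0 < INR n ^ S m) by (apply pow_lt; lra).
  rewrite Ecl. split.
  - apply Rmult_le_reg_r with (INR n ^ S m); auto. unfold Rdiv. rewrite Rmult_assoc, Rinv_l by lra.
    apply Rmult_le_reg_l with (INR (S m)); auto. field_simplify; lra.
  - apply Rmult_le_reg_r with (INR n ^ S m); auto. unfold Rdiv. rewrite Rmult_assoc, Rinv_l by lra.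
    rewrite Rmult_plus_distr_r. replace (/ INR n * INR n ^ S m) with (INR n ^ m) by (simpl; field; lra).
    assert (U <= V + INR n ^ m) by lra.
    assert (V <= / INR (S m) * INR n ^ S m).
    { apply Rmult_le_reg_l with (INR (S m)); auto. field_simplify; lra. }
    lra.
Qed.

Lemma cl_lim m : Un_cv (fun n => cl (S m) n) (/ INR (S m)).
Proof.
  intros e He. destruct (archimed_cor1 e He) as [N [HN HN0]].
  exists N. intros n Hn. unfold R_dist.
  pose proof (cl_bounds m n ltac:(lia)).
  assert (/ INR n <= / INR N).
  { apply Rinv_le_contravar. apply lt_0_INR; lia. apply le_INR; lia. }
  rewrite Rabs_pos_eq; lra.
Qed.

Lemma cl_0 l : cl l 0 = 0.
Proof. reflexivity. Qed.

Lemma cl_abs l n : Rabs (lna l * cl l n) <= 2.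
Proof.
  destruct l as [|m]. simpl lna. rewrite Rmult_0_l, Rabs_R0; lra.
  destruct n as [|n]. rewrite cl_0, Rmult_0_r, Rabs_R0; lra.
  pose proof (cl_bounds m (S n) ltac:(lia)).
  assert (/ INR (S m) <= 1). { rewrite <- Rinv_1. apply Rinv_le_contravar; [lra|]. apply (le_INR 1); lia. }
  assert (/ INR (S n) <= 1). { rewrite <- Rinv_1. apply Rinv_le_contravar; [lra|]. apply (le_INR 1); lia. }
  assert (0 < / INR (S m)) by (apply Rinv_0_lt_compat, lt_0_INR; lia).
  rewrite Rabs_mult. pose proof (lna_bound (S m)).
  rewrite (Rabs_pos_eq (cl _ _)) by lra.
  apply Rle_trans with (1 * 2); [|lra]. apply Rmult_le_compat; try lra. apply Rabs_pos.
Qed.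

Definition Tn (t : R) (n : nat) : R := sum1 (fun k => ln (1 + t * INR k / INR n) / INR k) n.

Lemma Tn_series t n : 0 <= t < 1 -> (1 <= n)%nat ->
  is_series (fun l => lna l * t ^ l * cl l n) (Tn t n).
Proof.
  intros Ht Hn. unfold Tn.
  assert (Hn0 : 0 < INR n) by (apply lt_0_INR; lia).
  eapply is_series_ext; [|apply (sum1_series (fun k l => lna l * (t * INR k / INR n) ^ l / INR k))].
  - intro l. cbv beta. unfold cl. rewrite <- sum1_scal. apply sum1_ext.
    intros k Hk. unfold Rdiv. rewrite !Rpow_mult_distr. ring.
  - intros k Hk. unfold Rdiv. apply is_series_scal_r.
    apply ln_series. assert (1 <= INR k <= INR n) by (split; [apply (le_INR 1)|apply le_INR]; lia).
    assert (0 <= t * INR k * / INR n <= t).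
    { split. apply Rmult_le_pos. nra. left; apply Rinv_0_lt_compat; lra.
      apply Rmult_le_reg_r with (INR n); auto. rewrite Rmult_assoc, Rinv_l by lra. nra. }
    rewrite Rabs_pos_eq; lra.
Qed.

Lemma Un_cv_ev (u v : nat -> R) l N : (forall n, (N <= n)%nat -> u n = v n) -> Un_cv u l -> Un_cv v l.
Proof.
  intros Huv Hu e He. destruct (Hu e He) as [M HM]. exists (max M N). intros n Hn.
  rewrite <- Huv by lia. apply HM. lia.
Qed.

Lemma Tn_lim x : 0 < x < 1 -> Un_cv (fun n => Tn (1 - x) n) (- PSeries sqa (x - 1)).
Proof.
  intro Hx. set (t := 1 - x).
  apply Un_cv_ev with (fun n => Series (fun l => lna l * t ^ l * cl l n)) 1%nat.
  { intros n Hn. apply is_series_unique. apply Tn_series; auto. unfold t; lra. }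
  replace (- PSeries sqa (x - 1)) with (Series (fun l => lna l * t ^ l * ilog l)).
  - apply tannery with (M := fun l => 2 * t ^ l) (SM := 2 * / (1 - t)).
    + intros n l. replace (lna l * t ^ l * cl l n) with ((lna l * cl l n) * t ^ l) by ring.
      rewrite Rabs_mult, (Rabs_pos_eq (t ^ l)) by (apply pow_le; unfold t; lra).
      rewrite Rmult_comm, (Rmult_comm 2). apply Rmult_le_compat_l. apply pow_le; unfold t; lra.
      apply cl_abs.
    + apply (is_series_scal_l (V:=R_NormedModule)) with (c := 2). apply is_series_geom.
      unfold t; rewrite Rabs_pos_eq; lra.
    + intro l. destruct l as [|m].
      * simpl lna. intros e He. exists O. intros. unfold R_dist. simpl. rewrite Rminus_diag_eq, Rabs_R0 by ring. auto.
      * apply (CV_mult (fun _ => lna (S m) * t ^ S m)). intros e He; exists O; intros; unfold R_dist; rewrite Rminus_diag_eq, Rabs_R0; auto.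
        apply cl_lim.
  - assert (Hr : Rabs (x - 1) < 1) by (apply Rabs_def1; lra).
    rewrite <- (is_series_unique _ _ (is_pseries_series _ _ _ (PSeries_correct _ _ (CV_radius_inside _ _ (sqa_radius (x-1) Hr))))).
    rewrite <- Series_opp. apply Series_ext. intro n.
    destruct n as [|m]. simpl. ring.
    unfold lna, ilog, sqa, t. replace (x - 1) with ((-1) * (1 - x)) by ring.
    rewrite Rpow_mult_distr. replace ((-1) ^ S m) with (- (-1) ^ m) by (simpl; ring).
    assert (INR (S m) <> 0) by (apply not_0_INR; lia).
    set (a := (-1) ^ m). set (b := (1 - x) ^ S m). set (c := INR (S m)) in *. field. auto.
Qed.

Definition Gf (g : nat -> nat -> R) (n : nat) (x : R) : R := Series (fun k => g n k * x ^ k).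

Lemma pmf_series (p : nat -> R) : is_pmf p -> is_series p 1.
Proof. intros [_ H]. apply is_series_Reals; auto. Qed.

Lemma Gf_spec g n x : is_pmf (g n) -> 0 <= x <= 1 ->
  is_series (fun k => g n k * x ^ k) (Gf g n x) /\ 0 <= Gf g n x <= 1.
Proof.
  intros Hp Hx. pose proof (pmf_series _ Hp) as H1. destruct Hp as [H0 _].
  assert (Hb : forall k, 0 <= g n k * x ^ k <= g n k).
  { intro k. split. apply Rmult_le_pos; auto. apply pow_le; lra.
    rewrite <- (Rmult_1_r (g n k)) at 2. apply Rmult_le_compat_l; auto. apply pow_le1; lra. }
  assert (Hex : ex_series (fun k => g n k * x ^ k)).
  { apply (ex_series_le (V:=R_CompleteNormedModule)) with (g n).
    intro k. unfold norm; simpl. rewrite Rabs_pos_eq; apply Hb. exists 1; auto. }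
  pose proof (Series_correct _ Hex) as Hs. split; auto. split.
  apply (series_ge0 _ _ (fun k => proj1 (Hb k)) Hs).
  apply (series_le_comp _ _ _ _ Hb Hs H1).
Qed.

Lemma Gf_1 g n : is_pmf (g n) -> Gf g n 1 = 1.
Proof.
  intro Hp. apply is_series_unique. eapply is_series_ext; [|apply (pmf_series _ Hp)].
  intro k. cbv beta. rewrite pow1. symmetry; apply Rmult_1_r.
Qed.

Fixpoint Pn (g : nat -> nat -> R) (n : nat) (x : R) : R :=
  match n with O => 1 | S m => Pn g m (Gf g (S m) x) * Hn (S m) x end.

Lemma ln_2y_range y : 0 <= y <= 1 -> 0 <= ln (2 - y) <= ln 2.
Proof.
  intro Hy. split.
  - destruct (Req_dec y 1). subst. replace (2 - 1) with 1 by ring. rewrite ln_1; lra.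
    left. rewrite <- ln_1. apply ln_increasing; lra.
  - destruct (Req_dec y 0). subst. rewrite Rminus_0_r. lra.
    left. apply ln_increasing; lra.
Qed.

Lemma Hn_range k y : (1 <= k)%nat -> 0 <= y <= 1 -> 0 < Hn k y <= 1.
Proof.
  intros Hk Hy. unfold Hn, H. pose proof (ln_2y_range y Hy). pose proof ln2_lt_1.
  assert (1 <= INR k) by (apply (le_INR 1); auto).
  replace (1 + (1 - ln (2 - y) - 1) / INR k) with (1 - ln (2 - y) / INR k) by (field; lra).
  assert (0 <= ln (2 - y) / INR k <= ln (2 - y)).
  { split. apply Rmult_le_pos; [lra|]. left; apply Rinv_0_lt_compat; lra.
    apply Rmult_le_reg_r with (INR k). lra. unfold Rdiv. rewrite Rmult_assoc, Rinv_l by lra. nra. }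
  lra.
Qed.

Lemma Pn_range g n x : (forall m, (1 <= m)%nat -> is_pmf (g m)) -> 0 <= x <= 1 -> 0 < Pn g n x <= 1.
Proof.
  intros Hg. revert x. induction n; intros x Hx; simpl. lra.
  destruct (Gf_spec g (S n) x (Hg (S n) ltac:(lia)) Hx) as [_ HG].
  destruct (IHn _ HG). destruct (Hn_range (S n) x ltac:(lia) Hx).
  split. apply Rmult_lt_0_compat; auto.
  rewrite <- (Rmult_1_r 1). apply Rmult_le_compat; lra.
Qed.

Lemma L_pgf g e L :
  (forall n, (1 <= n)%nat -> is_pmf (g n)) ->
  (forall n, (1 <= n)%nat -> is_pmf (e n) /\ has_pgf (e n) (Hn n)) ->
  bpi_laws g e L ->
  forall n, (forall k, 0 <= L n k) /\
    (forall x, 0 <= x <= 1 -> is_series (fun k => L n k * x ^ k) (Pn g n x)).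
Proof.
  intros Hg He [HL0 HL]. induction n as [|n [IH0 IH]].
  - rewrite HL0. split. intro k; destruct k; simpl; lra. intros x Hx. apply delta0_pgf.
  - assert (Hg' := Hg (S n) ltac:(lia)). destruct (He (S n) ltac:(lia)) as [[He0 _] He1].
    assert (Hg0 : forall k, 0 <= g (S n) k) by apply Hg'.
    set (c := fun m k => conv (convpow (g (S n)) m) (e (S n)) k).
    assert (Hc0 : forall m k, 0 <= c m k) by (intros; apply conv_nonneg; auto; apply convpow_nonneg; auto).
    assert (HLS : forall k, is_series (fun m => L n m * c m k) (L (S n) k)).
    { intro k. apply is_series_Reals. specialize (HL (S n) k ltac:(lia)).
      replace (S n - 1)%nat with n in HL by lia. apply HL. }
    assert (HL0' : forall k, 0 <= L (S n) k).
    { intro k. apply (series_ge0 _ _ (fun m => Rmult_le_pos _ _ (IH0 m) (Hc0 m k)) (HLS k)). }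
    split; auto.
    intros x Hx.
    destruct (Gf_spec g (S n) x Hg' Hx) as [HGs HGr].
    set (G := Gf g (S n) x) in *.
    set (Hx' := Hn (S n) x).
    assert (Hrow : forall m, is_series (fun k => L n m * c m k * x ^ k) (L n m * (G ^ m * Hx'))).
    { intro m.
      assert (Hcm : is_series (fun k => c m k * x ^ k) (G ^ m * Hx')).
      { unfold c. apply conv_pgf; auto. apply convpow_nonneg; auto. lra.
        apply convpow_pgf; auto. lra. apply is_series_Reals. apply He1. auto. }
      apply (is_series_scal_l (V:=R_NormedModule) (L n m)) in Hcm.
      eapply is_series_ext; [|apply Hcm].
      intro k. unfold scal; simpl; unfold mult; simpl. cbv beta. rring. }
    assert (Hsum : is_series (fun m => L n m * (G ^ m * Hx')) (Pn g n G * Hx')).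
    { eapply is_series_ext; [|apply (is_series_scal_r Hx' _ _ (IH G HGr))].
      intro m. cbv beta. rring. }
    destruct (tonelli (fun m k => L n m * c m k * x ^ k) _ _
               (fun m k => Rmult_le_pos _ _ (Rmult_le_pos _ _ (IH0 m) (Hc0 m k)) (pow_le _ k (proj1 Hx)))
               Hrow Hsum) as [_ HT].
    simpl Pn. fold G. fold Hx'.
    eapply is_series_ext; [|apply HT]. intro k. cbv beta.
    apply is_series_unique. apply is_series_scal_r. apply HLS.
Qed.

Lemma ln_le_m1 u : 0 < u -> ln u <= u - 1.
Proof.
  intro Hu. rewrite <- (ln_exp (u - 1)).
  destruct (Req_dec u (exp (u - 1))) as [E|NE]. rewrite <- E; lra.
  left. apply ln_increasing; auto. pose proof (exp_ineq1_le (u - 1)). lra.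
Qed.

Lemma ln_ge_1m u : 0 < u -> 1 - / u <= ln u.
Proof.
  intro Hu. pose proof (ln_le_m1 (/ u) (Rinv_0_lt_compat _ Hu)).
  rewrite ln_Rinv in H by auto. lra.
Qed.

Lemma bern_lo w k : 0 <= w <= 1 -> 1 - INR k * w <= (1 - w) ^ k.
Proof.
  intro Hw. induction k. simpl; lra.
  rewrite S_INR. simpl pow.
  assert ((1 - w) * (1 - INR k * w) <= (1 - w) * (1 - w) ^ k) by (apply Rmult_le_compat_l; lra).
  assert (0 <= INR k) by apply pos_INR. nra.
Qed.

Lemma bern_hi w k : 0 <= w <= 1 -> (1 - w) ^ k <= 1 - INR k * w + INR k * (INR k - 1) / 2 * w ^ 2.
Proof.
  intro Hw. induction k. simpl; lra.
  rewrite S_INR. simpl pow. simpl pow in IHk.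
  assert ((1 - w) * (1 - w) ^ k <= (1 - w) * (1 - INR k * w + INR k * (INR k - 1) / 2 * (w * (w * 1)))) by (apply Rmult_le_compat_l; lra).
  assert (Hk : 0 <= INR k * (INR k - 1)).
  { destruct k. simpl; lra. rewrite S_INR. pose proof (pos_INR k). apply Rmult_le_pos; lra. }
  assert (0 <= INR k * (INR k - 1) / 2 * (w * w * w)).
  { apply Rmult_le_pos. lra. repeat apply Rmult_le_pos; lra. }
  assert (E : (1 - (INR k + 1) * w + (INR k + 1) * (INR k + 1 - 1) / 2 * (w * (w * 1)))
     - (1 - w) * (1 - INR k * w + INR k * (INR k - 1) / 2 * (w * (w * 1)))
     = INR k * (INR k - 1) / 2 * (w * w * w)) by field.
  lra.
Qed.

Lemma G_rem_series g n y r : is_pmf (g n) -> infinite_sum (fun k => INR k * g n k) r -> 0 <= y <= 1 ->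
  is_series (fun k => g n k * (y ^ k - 1 + INR k * (1 - y))) (Gf g n y - 1 + r * (1 - y)).
Proof.
  intros Hp Hr Hy. destruct (Gf_spec g n y Hp Hy) as [HG _].
  pose proof (pmf_series _ Hp) as H1. apply is_series_Reals in Hr.
  pose proof (is_series_minus (V:=R_NormedModule) _ _ _ _ HG H1) as H2.
  pose proof (is_series_scal_r (1 - y) _ _ Hr) as H3.
  pose proof (is_series_plus (V:=R_NormedModule) _ _ _ _ H2 H3) as H4.
  eapply is_series_ext; [|apply H4]. intro k. unfold plus, opp; simpl. rring.
Qed.

Lemma G_lower g n y r : is_pmf (g n) -> infinite_sum (fun k => INR k * g n k) r -> 0 <= y <= 1 ->
  0 <= Gf g n y - 1 + r * (1 - y).
Proof.
  intros Hp Hr Hy. apply (series_ge0 (fun k => g n k * (y ^ k - 1 + INR k * (1 - y)))).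
  - intro k. apply Rmult_le_pos. apply Hp. pose proof (bern_lo (1 - y) k ltac:(lra)).
    replace (1 - (1 - y)) with y in H by ring. lra.
  - apply G_rem_series; auto.
Qed.

Lemma G_upper g n y r s : is_pmf (g n) -> infinite_sum (fun k => INR k * g n k) r ->
  infinite_sum (fun k => INR k * (INR k - 1) * g n k) s -> 0 <= y <= 1 ->
  Gf g n y - 1 + r * (1 - y) <= s * ((1 - y) ^ 2 / 2).
Proof.
  intros Hp Hr Hs Hy.
  apply (series_le_comp (fun k => g n k * (y ^ k - 1 + INR k * (1 - y)))
                        (fun k => INR k * (INR k - 1) * g n k * ((1 - y) ^ 2 / 2))).
  - intro k. pose proof (bern_lo (1 - y) k ltac:(lra)). pose proof (bern_hi (1 - y) k ltac:(lra)).
    replace (1 - (1 - y)) with y in * by ring.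
    assert (0 <= g n k) by apply Hp.
    split. apply Rmult_le_pos; lra.
    replace (INR k * (INR k - 1) * g n k * ((1 - y) ^ 2 / 2)) with (g n k * (INR k * (INR k - 1) / 2 * (1 - y) ^ 2)) by field.
    apply Rmult_le_compat_l; lra.
  - apply G_rem_series; auto.
  - apply is_series_scal_r. apply is_series_Reals; auto.
Qed.

Lemma s_nonneg (g : nat -> nat -> R) (n : nat) (s : R) : is_pmf (g n) -> infinite_sum (fun k => INR k * (INR k - 1) * g n k) s -> 0 <= s.
Proof.
  intros Hp Hs. apply is_series_Reals in Hs. apply (series_ge0 (fun k => INR k * (INR k - 1) * g n k)); auto.
  intro k. apply Rmult_le_pos; [|apply Hp]. destruct k. simpl; lra.
  rewrite S_INR. pose proof (pos_INR k). apply Rmult_le_pos; lra.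
Qed.

Lemma rho_S m : rho (S m) = INR m / INR (S m).
Proof. unfold rho. rewrite S_INR. field. pose proof (pos_INR m). lra. Qed.

Lemma rho_range n : (1 <= n)%nat -> 0 <= rho n <= 1.
Proof.
  intro Hn. destruct n. lia. rewrite rho_S. pose proof (pos_INR n). rewrite S_INR.
  split. apply Rmult_le_pos; [lra|]. left; apply Rinv_0_lt_compat; lra.
  apply Rmult_le_reg_r with (INR n + 1). lra. unfold Rdiv. rewrite Rmult_assoc, Rinv_l by lra. lra.
Qed.

Fixpoint Phi (g : nat -> nat -> R) (k n : nat) (y : R) : R :=
  match n with O => y | S m => if (k <=? m)%nat then Phi g k m (Gf g (S m) y) else y end.

Lemma Phi_unf g k m y : Phi g k (S m) y = if (k <=? m)%nat then Phi g k m (Gf g (S m) y) else y.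
Proof. reflexivity. Qed.

Lemma Phi_top g n y : Phi g n n y = y.
Proof. destruct n. reflexivity. rewrite Phi_unf.
  destruct (S n <=? n)%nat eqn:E; auto. apply Nat.leb_le in E. lia. Qed.

Lemma Phi_S g k m y : (k <= m)%nat -> Phi g k (S m) y = Phi g k m (Gf g (S m) y).
Proof. intro H. rewrite Phi_unf. destruct (k <=? m)%nat eqn:E; auto.
  apply Nat.leb_gt in E. lia. Qed.

Lemma Phi_range g k n y : (forall m, (1 <= m)%nat -> is_pmf (g m)) -> 0 <= y <= 1 -> 0 <= Phi g k n y <= 1.
Proof.
  intros Hg. revert y. induction n; intros y Hy. simpl; auto. rewrite Phi_unf.
  destruct (k <=? n)%nat; auto. apply IHn. apply (Gf_spec g (S n) y); auto. apply Hg; lia.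
Qed.

Lemma Phi_bound g k n y : (forall m, (1 <= m)%nat -> is_pmf (g m)) ->
  (forall m, (1 <= m)%nat -> infinite_sum (fun k => INR k * g m k) (rho m)) ->
  (1 <= k <= n)%nat -> 0 <= y <= 1 -> 1 - Phi g k n y <= (1 - y) * INR k / INR n.
Proof.
  intros Hg Hm. revert y. induction n; intros y Hk Hy. lia.
  destruct (Nat.eq_dec k (S n)) as [->|Hne].
  - rewrite Phi_top. assert (INR (S n) <> 0) by (apply not_0_INR; lia). right; field; auto.
  - rewrite Phi_S by lia.
    destruct (Gf_spec g (S n) y (Hg (S n) ltac:(lia)) Hy) as [_ HG].
    pose proof (G_lower g (S n) y (rho (S n)) (Hg (S n) ltac:(lia)) (Hm (S n) ltac:(lia)) Hy) as HL.
    rewrite rho_S in HL.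
    eapply Rle_trans. apply IHn; auto. lia.
    assert (0 < INR n) by (apply lt_0_INR; lia).
    assert (1 <= INR k) by (apply (le_INR 1); lia).
    rewrite S_INR in *.
    assert (1 - Gf g (S n) y <= INR n / (INR n + 1) * (1 - y)) by lra.
    unfold Rdiv. apply Rmult_le_reg_r with (INR n * (INR n + 1)). nra.
    replace ((1 - Gf g (S n) y) * INR k * / INR n * (INR n * (INR n + 1))) with
      ((1 - Gf g (S n) y) * INR k * (INR n + 1)) by (field; lra).
    replace ((1 - y) * INR k * / (INR n + 1) * (INR n * (INR n + 1))) with
      ((1 - y) * INR k * INR n) by (field; lra).
    assert ((1 - Gf g (S n) y) * (INR n + 1) <= (1 - y) * INR n).
    { apply Rmult_le_reg_r with (/ (INR n + 1)). apply Rinv_0_lt_compat; lra.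
      replace ((1 - Gf g (S n) y) * (INR n + 1) * / (INR n + 1)) with (1 - Gf g (S n) y) by (field; lra).
      unfold Rdiv in H1. lra. }
    nra.
Qed.

Definition LP g n y := sum1 (fun k => ln (Hn k (Phi g k n y))) n.

Lemma LP_eq g n y : (forall m, (1 <= m)%nat -> is_pmf (g m)) -> 0 <= y <= 1 -> ln (Pn g n y) = LP g n y.
Proof.
  intro Hg. revert y. induction n; intros y Hy. simpl. apply ln_1.
  simpl Pn. destruct (Gf_spec g (S n) y (Hg (S n) ltac:(lia)) Hy) as [_ HG].
  rewrite ln_mult. rewrite IHn by auto. unfold LP. rewrite sum1_S, Phi_top.
  f_equal. apply sum1_ext. intros k Hk. rewrite Phi_S by lia. reflexivity.
  apply Pn_range; auto. apply Hn_range; auto. lia.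
Qed.

Definition Qf g n y := sum1 (fun k => (1 - Phi g k n y) / INR k) n.

Lemma Qf_S g m y : Qf g (S m) y = Qf g m (Gf g (S m) y) + (1 - y) / INR (S m).
Proof.
  unfold Qf. rewrite sum1_S, Phi_top. f_equal. apply sum1_ext. intros k Hk.
  rewrite Phi_S by lia. reflexivity.
Qed.

Definition Sg g n y := (1 - y) - Qf g n y.

Definition Rm g j y := Gf g j y - 1 + rho j * (1 - y).

Lemma Sg_S g m y : Sg g (S m) y = Rm g (S m) y + Sg g m (Gf g (S m) y).
Proof. unfold Sg, Rm. rewrite Qf_S, rho_S. rewrite S_INR. field. pose proof (pos_INR m). lra. Qed.

Definition beta (N : nat) (s : nat -> R) (j : nat) (v : R) : R :=
  if (N <=? j)%nat then s j * v ^ 2 else v.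

Definition Bnd N s n w := sum1 (fun j => beta N s j (w * INR j / INR n)) n.

Lemma beta_nonneg N s j v : ((N <= j)%nat -> 0 <= s j) -> 0 <= v -> 0 <= beta N s j v.
Proof.
  intros Hs Hv. unfold beta. destruct (N <=? j)%nat eqn:E; auto.
  apply Nat.leb_le in E. apply Rmult_le_pos; auto. apply pow_le; auto.
Qed.

Lemma beta_mono N s j v v' : ((N <= j)%nat -> 0 <= s j) -> 0 <= v <= v' -> beta N s j v <= beta N s j v'.
Proof.
  intros Hs Hv. unfold beta. destruct (N <=? j)%nat eqn:E; try lra.
  apply Nat.leb_le in E. apply Rmult_le_compat_l; auto. apply pow_incr; auto.
Qed.

Lemma Rm_bound g j y N s : (1 <= j)%nat -> is_pmf (g j) ->
  infinite_sum (fun k => INR k * g j k) (rho j) ->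
  (forall n, (N <= n)%nat -> infinite_sum (fun k => INR k * (INR k - 1) * g n k) (s n)) ->
  0 <= y <= 1 -> Rm g j y <= beta N s j (1 - y).
Proof.
  intros Hj Hp Hr Hs Hy. unfold beta, Rm. destruct (N <=? j)%nat eqn:E.
  - apply Nat.leb_le in E. eapply Rle_trans. apply (G_upper g j y (rho j) (s j)); auto.
    pose proof (s_nonneg g j (s j) Hp (Hs j E)).
    assert (0 <= (1 - y) ^ 2) by (apply pow_le; lra). nra.
  - destruct (Gf_spec g j y Hp Hy). pose proof (rho_range j Hj). nra.
Qed.

Lemma Sg_bound g N s : (forall m, (1 <= m)%nat -> is_pmf (g m)) ->
  (forall m, (1 <= m)%nat -> infinite_sum (fun k => INR k * g m k) (rho m)) ->
  (forall n, (N <= n)%nat -> infinite_sum (fun k => INR k * (INR k - 1) * g n k) (s n)) ->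
  forall n y, (1 <= n)%nat -> 0 <= y <= 1 -> Sg g n y <= Bnd N s n (1 - y).
Proof.
  intros Hg Hm Hs.
  assert (Hs0 : forall j, (1 <= j)%nat -> (N <= j)%nat -> 0 <= s j).
  { intros j Hj HN. apply (s_nonneg g j); auto. }
  intro n. induction n as [|m IH]; intros y Hn Hy. lia.
  destruct m as [|m].
  - assert (E : Sg g 1 y = 0).
    { unfold Sg, Qf. rewrite sum1_S, Phi_top. change (sum1 (fun k => (1 - Phi g k 1 y) / INR k) 0) with 0.
      change (INR 1) with 1. field. }
    rewrite E.
    unfold Bnd. apply sum1_nonneg. intros k Hk. apply beta_nonneg. intro; apply Hs0; lia.
    simpl. replace k with 1%nat by lia. simpl. lra.
  - rewrite Sg_S.
    destruct (Gf_spec g (S (S m)) y (Hg (S (S m)) ltac:(lia)) Hy) as [_ HG].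
    pose proof (G_lower g (S (S m)) y (rho (S (S m))) (Hg (S (S m)) ltac:(lia)) (Hm (S (S m)) ltac:(lia)) Hy) as HL.
    set (y' := Gf g (S (S m)) y) in *.
    pose proof (Rm_bound g (S (S m)) y N s ltac:(lia) (Hg (S (S m)) ltac:(lia)) (Hm (S (S m)) ltac:(lia)) Hs Hy) as HR.
    specialize (IH y' ltac:(lia) HG).
    unfold Bnd. rewrite sum1_S.
    replace ((1 - y) * INR (S (S m)) / INR (S (S m))) with (1 - y) by (field; apply not_0_INR; lia).
    assert (Hstep : Bnd N s (S m) (1 - y') <= sum1 (fun j => beta N s j ((1 - y) * INR j / INR (S (S m)))) (S m)).
    { unfold Bnd. apply sum1_le. intros j Hj. apply beta_mono. intro; apply Hs0; lia.
      rewrite rho_S in HL. unfold Rm in *.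
      assert (0 < INR (S m)) by (apply lt_0_INR; lia).
      assert (0 < INR (S (S m))) by (apply lt_0_INR; lia).
      assert (0 <= INR j) by apply pos_INR.
      assert (H1y : 1 - y' <= INR (S m) / INR (S (S m)) * (1 - y)) by lra.
      split.
      - unfold Rdiv. apply Rmult_le_pos. apply Rmult_le_pos; lra. left; apply Rinv_0_lt_compat; lra.
      - unfold Rdiv. apply Rmult_le_reg_r with (INR (S m) * INR (S (S m))). nra.
        replace ((1 - y') * INR j * / INR (S m) * (INR (S m) * INR (S (S m)))) with
           ((1 - y') * INR (S (S m)) * INR j) by (field; lra).
        replace ((1 - y) * INR j * / INR (S (S m)) * (INR (S m) * INR (S (S m)))) with
           ((1 - y) * INR (S m) * INR j) by (field; lra).
        apply Rmult_le_compat_r. lra.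
        apply Rmult_le_reg_r with (/ INR (S (S m))). apply Rinv_0_lt_compat; lra.
        replace ((1 - y') * INR (S (S m)) * / INR (S (S m))) with (1 - y') by (field; lra).
        unfold Rdiv in H1y. lra. }
    lra.
Qed.

Definition Cst : R := / (1 - ln 2).

Lemma term_est k n t w : (1 <= k <= n)%nat -> 0 <= t < 1 ->
  0 <= w <= t * INR k / INR n ->
  Rabs (ln (Hn k (1 - w)) + ln (1 + t * INR k / INR n) / INR k)
    <= Cst * (t / INR n) ^ 2 + (t * INR k / INR n - w) / INR k.
Proof.
  intros Hk Ht Hw.
  assert (Hk1 : 1 <= INR k) by (apply (le_INR 1); lia).
  assert (Hkn : INR k <= INR n) by (apply le_INR; lia).
  set (b := t * INR k / INR n) in *.
  assert (Hb1 : b <= t).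
  { unfold b. apply Rmult_le_reg_r with (INR n). lra. unfold Rdiv.
    rewrite Rmult_assoc, Rinv_l by lra. nra. }
  assert (E1 : Hn k (1 - w) = 1 - ln (1 + w) / INR k).
  { unfold Hn, H. replace (2 - (1 - w)) with (1 + w) by ring. field. lra. }
  rewrite E1. set (a := ln (1 + w) / INR k).
  assert (Hlw : 0 <= ln (1 + w) <= w).
  { split. destruct (Req_dec w 0). subst. rewrite Rplus_0_r, ln_1; lra.
    left; rewrite <- ln_1; apply ln_increasing; lra.
    pose proof (ln_le_m1 (1 + w)). lra. }
  assert (Ha0 : 0 <= a) by (unfold a; apply Rmult_le_pos; [lra|left; apply Rinv_0_lt_compat; lra]).
  assert (Hawk : a <= w / INR k).
  { unfold a, Rdiv. apply Rmult_le_compat_r. left; apply Rinv_0_lt_compat; lra. lra. }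
  assert (Hwk : w / INR k <= t / INR n).
  { apply Rmult_le_reg_r with (INR k). lra. unfold Rdiv. rewrite Rmult_assoc, Rinv_l by lra.
    unfold b in Hw. unfold Rdiv in Hw. lra. }
  assert (Hln2 : a <= ln 2).
  { apply Rle_trans with (ln (1 + w)).
    unfold a. unfold Rdiv. rewrite <- (Rmult_1_r (ln (1 + w))) at 2.
    apply Rmult_le_compat_l. lra. rewrite <- Rinv_1. apply Rinv_le_contravar; lra.
    destruct (Req_dec w 1). subst. replace (1 + 1) with 2 by ring. lra.
    left. apply ln_increasing; lra. }
  pose proof ln2_lt_1 as Hl2.
  assert (Herr1 : Rabs (ln (1 - a) + a) <= Cst * (t / INR n) ^ 2).
  { assert (Hup : ln (1 - a) + a <= 0) by (pose proof (ln_le_m1 (1 - a)); lra).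
    assert (Hlo : - (a * a / (1 - a)) <= ln (1 - a) + a).
    { pose proof (ln_ge_1m (1 - a) ltac:(lra)).
      replace (- (a * a / (1 - a))) with (1 - / (1 - a) + a) by (field; lra). lra. }
    rewrite Rabs_left1 by auto.
    assert (a * a / (1 - a) <= Cst * (a * a)).
    { unfold Cst, Rdiv. rewrite Rmult_comm. apply Rmult_le_compat_r. nra.
      apply Rinv_le_contravar; lra. }
    assert (a * a <= (t / INR n) ^ 2) by (simpl; nra).
    assert (0 < Cst) by (unfold Cst; apply Rinv_0_lt_compat; lra).
    nra. }
  assert (Herr2 : 0 <= ln (1 + b) - ln (1 + w) <= b - w).
  { split.
    - destruct (Req_dec w b). subst; lra. assert (ln (1 + w) < ln (1 + b)) by (apply ln_increasing; lra). lra.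
    - rewrite <- ln_div by lra. pose proof (ln_le_m1 ((1 + b) / (1 + w)) ltac:(apply Rdiv_lt_0_compat; lra)).
      assert ((1 + b) / (1 + w) - 1 <= b - w).
      { apply Rmult_le_reg_r with (1 + w). lra. unfold Rdiv.
        replace (((1 + b) * / (1 + w) - 1) * (1 + w)) with (b - w) by (field; lra). nra. }
      lra. }
  replace (ln (1 - a) + ln (1 + b) / INR k) with ((ln (1 - a) + a) + (ln (1 + b) - ln (1 + w)) / INR k)
    by (unfold a; field; lra).
  eapply Rle_trans. apply Rabs_triang. apply Rplus_le_compat; auto.
  rewrite Rabs_pos_eq. unfold Rdiv. apply Rmult_le_compat_r. left; apply Rinv_0_lt_compat; lra. lra.
  apply Rmult_le_pos. lra. left; apply Rinv_0_lt_compat; lra.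
Qed.

Lemma LP_est g x n : (forall m, (1 <= m)%nat -> is_pmf (g m)) ->
  (forall m, (1 <= m)%nat -> infinite_sum (fun k => INR k * g m k) (rho m)) ->
  0 < x < 1 -> (1 <= n)%nat ->
  Rabs (LP g n x + Tn (1 - x) n) <= Cst * (1 - x) ^ 2 / INR n + Sg g n x.
Proof.
  intros Hg Hm Hx Hn.
  assert (Hn0 : 0 < INR n) by (apply lt_0_INR; lia).
  unfold LP, Tn. rewrite <- sum1_plus. eapply Rle_trans. apply sum1_abs.
  eapply Rle_trans. apply sum1_le with (G := fun k => Cst * ((1 - x) / INR n) ^ 2 + ((1 - x) * INR k / INR n - (1 - Phi g k n x)) / INR k).
  - intros k Hk. replace (Phi g k n x) with (1 - (1 - Phi g k n x)) at 1 by ring.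
    apply term_est; auto. lra.
    pose proof (Phi_range g k n x Hg ltac:(lra)). pose proof (Phi_bound g k n x Hg Hm Hk ltac:(lra)). lra.
  - rewrite sum1_plus, sum1_const. unfold Sg, Qf.
    rewrite (sum1_ext _ (fun k => (1 - x) / INR n - (1 - Phi g k n x) / INR k)).
    rewrite sum1_minus, sum1_const. right. field. lra.
    intros k Hk. assert (0 < INR k) by (apply lt_0_INR; lia). field. lra.
Qed.

Lemma sum1_vanish c n M : (forall j, 0 <= c j) -> (forall j, (M < j)%nat -> c j = 0) -> sum1 c n <= sum1 c M.
Proof.
  intros H0 HM. induction n. apply sum1_nonneg; auto.
  destruct (le_lt_dec (S n) M). apply sum1_mono; auto.
  rewrite sum1_S, HM by lia. lra.
Qed.

Lemma Bnd_lim N s t : 0 <= t <= 1 ->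
  (forall j, (1 <= j)%nat -> (N <= j)%nat -> 0 <= s j) ->
  Un_cv (fun n => s n * INR n) 0 -> Un_cv (fun n => Bnd N s n t) 0.
Proof.
  intros Ht Hs0 Hs eps Heps.
  destruct (Hs (eps / 2)) as [M0 HM0]. lra.
  set (M := max (max M0 N) 1).
  set (c := fun j => if (j <? M)%nat then (1 + Rabs (s j)) * INR M else 0).
  assert (Hc0 : forall j, 0 <= c j).
  { intro j. unfold c. destruct (j <? M)%nat. apply Rmult_le_pos. pose proof (Rabs_pos (s j)); lra. apply pos_INR. lra. }
  set (K := sum1 c M).
  destruct (archimed_cor1 (eps / (2 * (K + 1)))) as [N1 [HN1 HN1p]].
  { apply Rdiv_lt_0_compat. lra. assert (0 <= K) by (apply sum1_nonneg; auto). lra. }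
  exists N1. intros n Hn. unfold R_dist. rewrite Rminus_0_r.
  assert (Hn0 : 0 < INR n) by (apply lt_0_INR; lia).
  assert (HB0 : 0 <= Bnd N s n t).
  { apply sum1_nonneg. intros j Hj. apply beta_nonneg. intro; apply Hs0; lia.
    apply Rmult_le_pos. apply Rmult_le_pos. lra. apply pos_INR. left; apply Rinv_0_lt_compat; lra. }
  rewrite Rabs_pos_eq by auto.
  assert (Hterm : forall j, (1 <= j <= n)%nat -> beta N s j (t * INR j / INR n) <= eps / 2 / INR n + c j / INR n).
  { intros j Hj.
    assert (Hj1 : 1 <= INR j) by (apply (le_INR 1); lia).
    assert (Hjn : INR j <= INR n) by (apply le_INR; lia).
    assert (Hv0 : 0 <= t * INR j / INR n) by (apply Rmult_le_pos; [nra|left; apply Rinv_0_lt_compat; lra]).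
    assert (Hv1 : t * INR j / INR n <= INR j / INR n).
    { unfold Rdiv. apply Rmult_le_compat_r. left; apply Rinv_0_lt_compat; lra. nra. }
    assert (Hv2 : INR j / INR n <= 1).
    { apply Rmult_le_reg_r with (INR n); auto. unfold Rdiv. rewrite Rmult_assoc, Rinv_l by lra. lra. }
    assert (Hepsn : 0 <= eps / 2 / INR n) by (apply Rmult_le_pos; [lra|left; apply Rinv_0_lt_compat; lra]).
    unfold beta, c. destruct (j <? M)%nat eqn:EjM.
    - apply Nat.ltb_lt in EjM.
      assert (HjM : INR j <= INR M) by (apply le_INR; lia).
      assert (Hc : (N <=? j)%nat = true -> s j * (t * INR j / INR n) ^ 2 <= (1 + Rabs (s j)) * INR M / INR n).
      { intro E. apply Nat.leb_le in E. pose proof (Hs0 j ltac:(lia) E).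
        rewrite Rabs_pos_eq by auto. simpl.
        assert ((t * INR j / INR n) * (t * INR j / INR n) <= INR j / INR n) by nra.
        assert ((INR j / INR n) <= INR M / INR n).
        { unfold Rdiv. apply Rmult_le_compat_r. left; apply Rinv_0_lt_compat; lra. auto. }
        unfold Rdiv in *. nra. }
      destruct (N <=? j)%nat. specialize (Hc eq_refl). lra.
      assert (t * INR j / INR n <= INR M / INR n).
      { unfold Rdiv. apply Rmult_le_compat_r. left; apply Rinv_0_lt_compat; lra. nra. }
      assert (INR M / INR n <= (1 + Rabs (s j)) * INR M / INR n).
      { unfold Rdiv. rewrite Rmult_assoc. rewrite <- (Rmult_1_l (INR M * / INR n)) at 1.
        apply Rmult_le_compat_r. apply Rmult_le_pos. apply pos_INR. left; apply Rinv_0_lt_compat; lra.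
        pose proof (Rabs_pos (s j)). lra. }
      lra.
    - apply Nat.ltb_ge in EjM.
      assert (HN : (N <=? j)%nat = true) by (apply Nat.leb_le; lia).
      rewrite HN. pose proof (Hs0 j ltac:(lia) ltac:(lia)) as Hsj.
      specialize (HM0 j ltac:(lia)). unfold R_dist in HM0. rewrite Rminus_0_r in HM0.
      rewrite Rabs_pos_eq in HM0 by (apply Rmult_le_pos; auto; apply pos_INR).
      simpl. unfold Rdiv in *.
      assert (t * INR j * / INR n * (t * INR j * / INR n * 1) <= INR j * / INR n * / INR n * INR j).
      { replace (INR j * / INR n * / INR n * INR j) with ((INR j * / INR n) * (INR j * / INR n)) by ring.
        rewrite Rmult_1_r. apply Rmult_le_compat; nra. }
      assert (s j * INR j * (INR j * / INR n * / INR n) <= eps * / 2 * / INR n).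
      { assert (INR j * / INR n * / INR n <= / INR n).
        { replace (INR j * / INR n * / INR n) with ((INR j * / INR n) * / INR n) by ring.
          apply Rle_trans with (1 * / INR n); [|lra]. apply Rmult_le_compat_r. left; apply Rinv_0_lt_compat; lra. lra. }
        assert (0 <= INR j * / INR n * / INR n).
        { apply Rmult_le_pos. apply Rmult_le_pos. lra. left; apply Rinv_0_lt_compat; lra. left; apply Rinv_0_lt_compat; lra. }
        assert (0 <= s j * INR j) by (apply Rmult_le_pos; lra).
        apply Rle_trans with (eps * / 2 * (INR j * / INR n * / INR n)). apply Rmult_le_compat_r; lra.
        apply Rmult_le_compat_l; lra. }
      nra. }
  unfold Bnd. eapply Rle_lt_trans. apply sum1_le. exact Hterm.
  rewrite sum1_plus, sum1_const.
  unfold Rdiv at 2. rewrite (sum1_ext (fun j => c j * / INR n) (fun j => / INR n * c j)) by (intros; ring).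
  rewrite sum1_scal.
  assert (HcK : sum1 c n <= K).
  { apply sum1_vanish; auto. intros j Hj. unfold c. replace (j <? M)%nat with false; auto.
    symmetry; apply Nat.ltb_ge; lia. }
  assert (HK0 : 0 <= K) by (apply sum1_nonneg; auto).
  assert (HnN : / INR n <= / INR N1).
  { apply Rinv_le_contravar. apply lt_0_INR; lia. apply le_INR; lia. }
  assert (/ INR n * K <= eps / 2 * (K / (K + 1))).
  { apply Rle_trans with (/ INR N1 * K). apply Rmult_le_compat_r; auto.
    replace (eps / 2 * (K / (K + 1))) with (eps / (2 * (K + 1)) * K) by (field; lra).
    apply Rmult_le_compat_r; auto. lra. }
  assert (K / (K + 1) < 1).
  { apply Rmult_lt_reg_r with (K + 1). lra. unfold Rdiv. rewrite Rmult_assoc, Rinv_l by lra. lra. }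
  assert (/ INR n * sum1 c n <= / INR n * K) by (apply Rmult_le_compat_l; [left; apply Rinv_0_lt_compat|]; lra).
  replace (INR n * (eps * / 2 / INR n)) with (eps / 2) by (field; lra).
  assert (eps / 2 * (K / (K + 1)) < eps / 2 * 1) by (apply Rmult_lt_compat_l; lra).
  lra.
Qed.

Lemma cv_approx (u v e : nat -> R) l : Un_cv u l -> Un_cv e 0 ->
  (exists N, forall n, (N <= n)%nat -> Rabs (v n - u n) <= e n) -> Un_cv v l.
Proof.
  intros Hu He [N HN] eps Heps.
  destruct (Hu (eps / 2)) as [N1 H1]. lra. destruct (He (eps / 2)) as [N2 H2]. lra.
  exists (max N (max N1 N2)). intros n Hn.
  specialize (H1 n ltac:(lia)). specialize (H2 n ltac:(lia)). specialize (HN n ltac:(lia)).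
  unfold R_dist in *. rewrite Rminus_0_r in H2.
  replace (v n - l) with ((v n - u n) + (u n - l)) by ring.
  eapply Rle_lt_trans. apply Rabs_triang.
  pose proof (Rle_abs (e n)). lra.
Qed.

Lemma inv_n_cv c : Un_cv (fun n => c / INR n) 0.
Proof.
  intros eps Heps.
  destruct (archimed_cor1 (eps / (Rabs c + 1))) as [N [HN HN0]].
  apply Rdiv_lt_0_compat; [lra|pose proof (Rabs_pos c); lra].
  exists N. intros n Hn. unfold R_dist. rewrite Rminus_0_r.
  assert (0 < INR n) by (apply lt_0_INR; lia).
  unfold Rdiv. rewrite Rabs_mult, Rabs_Rinv, (Rabs_pos_eq (INR n)) by lra.
  assert (/ INR n <= / INR N) by (apply Rinv_le_contravar; [apply lt_0_INR; lia|apply le_INR; lia]).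
  assert (0 < / INR n) by (apply Rinv_0_lt_compat; lra).
  pose proof (Rabs_pos c).
  apply Rle_lt_trans with ((Rabs c + 1) * / INR N).
  apply Rmult_le_compat; lra.
  apply Rmult_lt_reg_l with (/ (Rabs c + 1)). apply Rinv_0_lt_compat; lra.
  rewrite <- Rmult_assoc, Rinv_l by lra. unfold Rdiv in HN. lra.
Qed.

Lemma Pn_lim g N s x :
  (forall m, (1 <= m)%nat -> is_pmf (g m)) ->
  (forall m, (1 <= m)%nat -> infinite_sum (fun k => INR k * g m k) (rho m)) ->
  (forall n, (N <= n)%nat -> infinite_sum (fun k => INR k * (INR k - 1) * g n k) (s n)) ->
  Un_cv (fun n => s n * INR n) 0 -> 0 < x < 1 ->
  Un_cv (fun n => Pn g n x) (exp (PSeries sqa (x - 1))).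
Proof.
  intros Hg Hm HsN Hs Hx.
  assert (Hs0 : forall j, (1 <= j)%nat -> (N <= j)%nat -> 0 <= s j).
  { intros j Hj HN. apply (s_nonneg g j); auto. }
  assert (HLP : Un_cv (fun n => LP g n x) (PSeries sqa (x - 1))).
  { apply cv_approx with (u := fun n => - Tn (1 - x) n)
      (e := fun n => Cst * (1 - x) ^ 2 / INR n + Bnd N s n (1 - x)).
    - replace (PSeries sqa (x - 1)) with (- - PSeries sqa (x - 1)) by ring.
      apply CV_opp. apply Tn_lim; auto.
    - replace 0 with (0 + 0) by ring. apply CV_plus. apply inv_n_cv.
      apply Bnd_lim; auto. lra.
    - exists 1%nat. intros n Hn. replace (LP g n x - - Tn (1 - x) n) with (LP g n x + Tn (1 - x) n) by ring.
      eapply Rle_trans. apply LP_est; auto.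
      pose proof (Sg_bound g N s Hg Hm HsN n x Hn ltac:(lra)). lra. }
  apply Un_cv_ev with (fun n => exp (LP g n x)) O.
  - intros n _. rewrite <- LP_eq by (auto; lra). apply exp_ln. apply Pn_range; auto. lra.
  - apply continuity_seq; auto. apply derivable_continuous_pt. apply derivable_pt_exp.
Qed.

Lemma psum_mono (f : nat -> R) m n : (forall j, 0 <= f j) -> (m <= n)%nat -> sum_f_R0 f m <= sum_f_R0 f n.
Proof. intros Hf Hmn. induction Hmn. lra. simpl. specialize (Hf (S m0)). lra. Qed.

Lemma tail_bound (a : nat -> R) x l k : (forall j, 0 <= a j) -> (forall N, sum_f_R0 a N <= 1) ->
  0 <= x <= 1 -> is_series (fun j => a j * x ^ j) l ->
  0 <= l - sum_f_R0 (fun j => a j * x ^ j) k <= x ^ S k.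
Proof.
  intros Ha H1 Hx Hl.
  assert (Hb0 : forall j, 0 <= a j * x ^ j) by (intro j; apply Rmult_le_pos; auto; apply pow_le; lra).
  split. pose proof (psum_le_lim _ _ Hb0 Hl k). lra.
  assert (C : forall N, sum_f_R0 (fun j => a j * x ^ j) N <= sum_f_R0 (fun j => a j * x ^ j) k + x ^ S k * sum_f_R0 a N).
  { intro N. assert (0 <= x ^ S k * sum_f_R0 a N) by (apply Rmult_le_pos; [apply pow_le; lra|apply cond_pos_sum; auto]).
    induction N.
    - assert (sum_f_R0 (fun j => a j * x ^ j) 0 <= sum_f_R0 (fun j => a j * x ^ j) k).
      { apply psum_mono; auto; lia. }
      lra.
    - destruct (le_lt_dec (S N) k).
      + assert (sum_f_R0 (fun j => a j * x ^ j) (S N) <= sum_f_R0 (fun j => a j * x ^ j) k).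
        { apply psum_mono; auto. }
        lra.
      + rewrite !tech5. assert (0 <= x ^ S k * sum_f_R0 a N) by (apply Rmult_le_pos; [apply pow_le; lra|apply cond_pos_sum; auto]).
        specialize (IHN H0).
        assert (x ^ S N <= x ^ S k) by (apply pow_le_anti; [lra|lia]).
        assert (a (S N) * x ^ S N <= x ^ S k * a (S N)).
        { rewrite Rmult_comm. apply Rmult_le_compat_r; auto. }
        lra. }
  assert (l <= sum_f_R0 (fun j => a j * x ^ j) k + x ^ S k).
  { apply (lim_le_bound _ _ _ Hl). intro N. specialize (C N). specialize (H1 N).
    assert (x ^ S k * sum_f_R0 a N <= x ^ S k) .
    { rewrite <- (Rmult_1_r (x ^ S k)) at 2. apply Rmult_le_compat_l; auto. apply pow_le; lra. }
    lra. }
  lra.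
Qed.

Lemma Un_cv_const c : Un_cv (fun _ => c) c.
Proof. intros e He. exists O. intros. unfold R_dist. rewrite Rminus_diag_eq, Rabs_R0; auto. Qed.

Lemma below_cv (d : nat -> nat -> R) k : (forall j, (j < k)%nat -> Un_cv (fun n => d n j) 0) ->
  Un_cv (fun n => sum_f_R0 (d n) k - d n k) 0.
Proof.
  induction k; intro H.
  - apply Un_cv_ev with (fun _ => 0) O. intros n _. simpl. ring. apply Un_cv_const.
  - apply Un_cv_ev with (fun n => (sum_f_R0 (d n) k - d n k) + d n k) O.
    intros n _. rewrite tech5. ring.
    replace 0 with (0 + 0) by ring. apply CV_plus. apply IHk. intros; apply H; lia. apply H; lia.
Qed.

Lemma cont_thm (p : nat -> nat -> R) (q : nat -> R) (P : nat -> R -> R) (Q : R -> R) :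
  (forall n k, 0 <= p n k) -> (forall n N, sum_f_R0 (p n) N <= 1) ->
  (forall k, 0 <= q k) -> (forall N, sum_f_R0 q N <= 1) ->
  (forall n x, 0 < x < 1 -> is_series (fun k => p n k * x ^ k) (P n x)) ->
  (forall x, 0 < x < 1 -> is_series (fun k => q k * x ^ k) (Q x)) ->
  (forall x, 0 < x < 1 -> Un_cv (fun n => P n x) (Q x)) ->
  forall k, Un_cv (fun n => p n k) (q k).
Proof.
  intros Hp0 Hp1 Hq0 Hq1 HP HQ HPQ k.
  induction k as [k IH] using lt_wf_ind.
  intros eps Heps.
  set (x := Rmin (1 / 2) (eps / 8)).
  assert (Hx : 0 < x < 1).
  { unfold x. split. apply Rmin_glb_lt; lra. pose proof (Rmin_l (1/2) (eps/8)). lra. }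
  assert (Hx8 : x <= eps / 8) by apply Rmin_r.
  set (d := fun n j => (p n j - q j) * x ^ j).
  assert (Hd : forall j, (j < k)%nat -> Un_cv (fun n => d n j) 0).
  { intros j Hj. unfold d. replace 0 with ((q j - q j) * x ^ j) by ring.
    apply CV_mult. apply CV_minus. apply IH; auto. apply Un_cv_const. apply Un_cv_const. }
  pose proof (below_cv d k Hd) as HB.
  assert (Hxk : 0 < x ^ k) by (apply pow_lt; lra).
  set (eta := eps * x ^ k / 4).
  assert (Heta : 0 < eta) by (unfold eta; apply Rmult_lt_0_compat; [apply Rmult_lt_0_compat|]; lra).
  destruct (HPQ x Hx eta Heta) as [N1 HN1].
  destruct (HB eta Heta) as [N2 HN2].
  exists (max N1 N2). intros n Hn.
  specialize (HN1 n ltac:(lia)). specialize (HN2 n ltac:(lia)). unfold R_dist in *.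
  rewrite Rminus_0_r in HN2.
  pose proof (tail_bound (p n) x (P n x) k (Hp0 n) (Hp1 n) ltac:(lra) (HP n x Hx)) as T1.
  pose proof (tail_bound q x (Q x) k Hq0 Hq1 ltac:(lra) (HQ x Hx)) as T2.
  assert (E : sum_f_R0 (d n) k = sum_f_R0 (fun j => p n j * x ^ j) k - sum_f_R0 (fun j => q j * x ^ j) k).
  { rewrite <- minus_sum. apply sum_eq. intros. unfold d. ring. }
  assert (Hid : (p n k - q k) * x ^ k =
     (P n x - Q x) - ((P n x - sum_f_R0 (fun j => p n j * x ^ j) k) - (Q x - sum_f_R0 (fun j => q j * x ^ j) k))
     - (sum_f_R0 (d n) k - d n k)).
  { rewrite E. unfold d. ring. }
  assert (Habs : Rabs (p n k - q k) * x ^ k <= eta + x ^ S k + eta).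
  { rewrite <- (Rabs_pos_eq (x ^ k)) by lra. rewrite <- Rabs_mult, Hid.
    unfold Rminus at 1. eapply Rle_trans. apply Rabs_triang. rewrite Rabs_Ropp.
    unfold Rminus at 1. apply Rplus_le_compat; [|lra].
    eapply Rle_trans. apply Rabs_triang. rewrite Rabs_Ropp. apply Rplus_le_compat. lra.
    apply Rabs_le. lra. }
  assert (Hsk : x ^ S k = x * x ^ k) by reflexivity.
  apply Rmult_lt_reg_r with (x ^ k); auto.
  unfold eta in Habs. rewrite Hsk in Habs.
  assert (x * x ^ k <= eps / 8 * x ^ k) by (apply Rmult_le_compat_r; lra).
  set (z := x ^ k) in *. set (w := x * z) in *.
  assert (0 < eps * z) by (apply Rmult_lt_0_compat; lra).
  replace (eps / 8 * z) with (eps * z / 8) in H by field.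
  replace (eps * z / 4) with (eps * z * / 4) in Habs by field.
  lra.
Qed.

Lemma exp_series y : is_series (fun m => / INR (fact m) * y ^ m) (exp y).
Proof. apply is_series_Reals. unfold exp. destruct (exist_exp y) as [l Hl]. simpl. exact Hl. Qed.

Definition lam : R := PSeries mub 1.

Definition qcp (k : nat) : R := Series (fun m => exp (- lam) / INR (fact m) * convpow mub m k).

Lemma mub_nonneg j : 0 <= mub j.
Proof. apply mub_bound. Qed.

Lemma M_series x : 0 <= x <= 1 -> is_series (fun j => mub j * x ^ j) (PSeries mub x).
Proof.
  intro Hx. apply is_pseries_series. apply PSeries_correct. apply CV_radius_inside.
  apply mub_radius. rewrite Rabs_pos_eq; lra.
Qed.

Lemma qcp_spec x : 0 <= x <= 1 ->
  (forall k, ex_series (fun m => exp (- lam) / INR (fact m) * convpow mub m k * x ^ k)) /\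
  is_series (fun k => qcp k * x ^ k) (exp (PSeries mub x - lam)).
Proof.
  intro Hx.
  assert (Hf : forall m, 0 < INR (fact m)) by (intro m; apply lt_0_INR, lt_O_fact).
  assert (Hc : forall m, 0 <= exp (- lam) / INR (fact m)).
  { intro m. apply Rmult_le_pos. left; apply exp_pos. left; apply Rinv_0_lt_compat; auto. }
  set (M := PSeries mub x).
  assert (Hrow : forall m, is_series (fun k => exp (- lam) / INR (fact m) * convpow mub m k * x ^ k)
                                     (exp (- lam) / INR (fact m) * M ^ m)).
  { intro m. pose proof (convpow_pgf mub M x mub_nonneg ltac:(lra) (M_series x Hx) m) as H.
    apply (is_series_scal_l (V:=R_NormedModule) (exp (- lam) / INR (fact m))) in H.
    eapply is_series_ext; [|apply H]. intro k. unfold scal; simpl; unfold mult; simpl. rring. }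
  assert (Hsum : is_series (fun m => exp (- lam) / INR (fact m) * M ^ m) (exp (M - lam))).
  { pose proof (exp_series M) as H.
    apply (is_series_scal_l (V:=R_NormedModule) (exp (- lam))) in H.
    unfold Rminus. rewrite exp_plus, Rmult_comm.
    eapply is_series_ext; [|apply H]. intro m. unfold scal; simpl; unfold mult; simpl. unfold Rdiv. rring. }
  destruct (tonelli _ _ _ (fun m k => Rmult_le_pos _ _ (Rmult_le_pos _ _ (Hc m) (convpow_nonneg mub mub_nonneg m k)) (pow_le _ k (proj1 Hx))) Hrow Hsum) as [Hex HT].
  split; auto.
  eapply is_series_ext; [|apply HT]. intro k. cbv beta. unfold qcp.
  rewrite <- Series_scal_r. reflexivity.
Qed.

Lemma qcp_nonneg k : 0 <= qcp k.
Proof.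
  destruct (qcp_spec 1 ltac:(lra)) as [Hex _].
  specialize (Hex k).
  assert (Hex' : ex_series (fun m => exp (- lam) / INR (fact m) * convpow mub m k)).
  { eapply ex_series_ext; [|apply Hex]. intro m. cbv beta. rewrite pow1. apply Rmult_1_r. }
  unfold qcp. apply (series_ge0 (fun m => exp (- lam) / INR (fact m) * convpow mub m k)).
  - intro m. apply Rmult_le_pos. apply Rmult_le_pos. left; apply exp_pos.
    left; apply Rinv_0_lt_compat, lt_0_INR, lt_O_fact. apply convpow_nonneg. apply mub_nonneg.
  - apply Series_correct; auto.
Qed.

Lemma qcp_sum : is_series qcp 1.
Proof.
  destruct (qcp_spec 1 ltac:(lra)) as [_ H]. unfold lam in H. rewrite Rminus_diag_eq, exp_0 in H by auto.
  eapply is_series_ext; [|apply H]. intro k. cbv beta. rewrite pow1. apply Rmult_1_r.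
Qed.

Lemma qcp_CP : is_CP_mu qcp.
Proof.
  split.
  - split. apply qcp_nonneg. apply is_series_Reals. apply qcp_sum.
  - intros x Hx. exists (PSeries mub x - lam). split.
    + apply is_series_Reals. unfold lam.
      eapply is_series_ext; [|apply (is_series_minus (V:=R_NormedModule)); apply mub_series].
      intro n. cbv beta. rewrite pow1. unfold plus, opp; simpl. ring.
      rewrite Rabs_pos_eq; lra. rewrite Rabs_R1; lra.
    + apply is_series_Reals. apply qcp_spec; auto.
Qed.

Lemma part3 : forall (g e L : nat -> nat -> R),
     (forall n, (1 <= n)%nat -> is_pmf (g n)) ->
     (forall n, (1 <= n)%nat -> infinite_sum (fun k => INR k * g n k) (rho n)) ->
     (exists (N : nat) (s : nat -> R),
        (forall n, (N <= n)%nat ->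
           infinite_sum (fun k => INR k * (INR k - 1) * g n k) (s n)) /\
        Un_cv (fun n => s n * INR n) 0) ->
     (forall n, (1 <= n)%nat -> is_pmf (e n) /\ has_pgf (e n) (Hn n)) ->
     bpi_laws g e L ->
     exists q : nat -> R, is_CP_mu q /\ conv_dist L q.
Proof.
  intros g e L Hg Hm [N [s [HsN Hs]]] He HL.
  exists qcp. split. apply qcp_CP.
  pose proof (L_pgf g e L Hg He HL) as HLp.
  intro k.
  apply (cont_thm L qcp (Pn g) (fun x => exp (PSeries mub x - lam))).
  - intros n j. apply HLp.
  - intros n M. destruct (HLp n) as [H0 H1]. specialize (H1 1 ltac:(lra)).
    assert (H1' : is_series (L n) (Pn g n 1)).
    { eapply is_series_ext; [|apply H1]. intro j. cbv beta. rewrite pow1. apply Rmult_1_r. }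
    pose proof (psum_le_lim _ _ H0 H1' M). pose proof (Pn_range g n 1 Hg ltac:(lra)). lra.
  - apply qcp_nonneg.
  - intro M. apply (psum_le_lim _ _ qcp_nonneg qcp_sum M).
  - intros n x Hx. apply HLp. lra.
  - intros x Hx. apply qcp_spec. lra.
  - intros x Hx. unfold lam. rewrite <- part4_identity by auto.
    apply (Pn_lim g N s x); auto.
Qed.

Theorem mainTheorem9 :
  (* H_n is a probability generating function *)
  (forall n : nat, (1 <= n)%nat -> is_pgf (Hn n)) /\
  (* lim_n H_n^(k)(1) / (k (1 - rho_n)) = (k-1)!/k, for every k >= 1 *)
  (forall k : nat, (1 <= k)%nat ->
     exists d : nat -> R -> R,
       (forall n : nat, (1 <= n)%nat -> nth_deriv (fun x => 0 < x < 2) k (Hn n) (d n)) /\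
       Un_cv (fun m => d (S m) 1 / (INR k * (1 - rho (S m))))
             (INR (fact (k - 1)) / INR k)) /\
  (* convergence in distribution of X_n to CP(mu) *)
  (forall (g e L : nat -> nat -> R),
     (forall n, (1 <= n)%nat -> is_pmf (g n)) ->
     (forall n, (1 <= n)%nat -> infinite_sum (fun k => INR k * g n k) (rho n)) ->
     (exists (N : nat) (s : nat -> R),
        (forall n, (N <= n)%nat ->
           infinite_sum (fun k => INR k * (INR k - 1) * g n k) (s n)) /\
        Un_cv (fun n => s n * INR n) 0) ->
     (forall n, (1 <= n)%nat -> is_pmf (e n) /\ has_pgf (e n) (Hn n)) ->
     bpi_laws g e L ->
     exists q : nat -> R, is_CP_mu q /\ conv_dist L q) /\
  (* the identity of generating exponents on (0,1) *)
  (forall x : R, 0 < x < 1 ->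
     exists s0 : R,
       infinite_sum (fun l => (x - 1) ^ (S l) / (INR (S l)) ^ 2) s0 /\
       infinite_sum (fun j => mu (S j) * (x ^ (S j) - 1)) s0).
Proof.
  split; [exact part1|]. split; [exact part2|]. split; [exact part3|]. exact part4.
Qed.
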